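(* Let $n\geq 2$ and let $A\in SL(2,\mathbb{Z})$ be a hyperbolic matrix with an eigenvalue $\lambda>n$, inducing the Anosov automorphism $h$ of $\mathbb{T}^2=\mathbb{R}^2/\mathbb{Z}^2$. Then there is no homeomorphism $f$ of $\mathbb{T}^2$ such that $hfh^{-1}=f^n$ and the homomorphism $BS(1,n)=\langle a,b\mid aba^{-1}=b^n\rangle\to\mathrm{Homeo}(\mathbb{T}^2)$, $a\mapsto h$, $b\mapsto f$, is injective. *)

(* Defs.v *)
From Stdlib Require Import Reals Lra ZArith List.
Open Scope R_scope.

(** The torus T^2 = R^2/Z^2, represented by the normalised representatives
    in [0,1)^2. *)
Definition T2 : Type :=
  { p : R * R | (0 <= fst p < 1) /\ (0 <= snd p < 1) }.

Lemma frac_part_range (x : R) : 0 <= frac_part x < 1.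
Proof. destruct (base_fp x) as [H1 H2]; split; lra. Qed.

Definition proj (v : R * R) : T2 :=
  exist _ (frac_part (fst v), frac_part (snd v))
        (conj (frac_part_range (fst v)) (frac_part_range (snd v))).

(** Distance on the circle R/Z, and the (max-)flat metric on T^2;
    it induces the quotient topology of T^2. *)
Definition circ_dist (x y : R) : R :=
  Rmin (frac_part (x - y)) (1 - frac_part (x - y)).

Definition tdist (p q : T2) : R :=
  Rmax (circ_dist (fst (proj1_sig p)) (fst (proj1_sig q)))
       (circ_dist (snd (proj1_sig p)) (snd (proj1_sig q))).

Definition tcontinuous (f : T2 -> T2) : Prop :=
  forall p (eps : R), 0 < eps -> exists delta, 0 < delta /\
    forall q, tdist p q < delta -> tdist (f p) (f q) < eps.

Definition is_homeo (f g : T2 -> T2) : Prop :=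
  (forall p, g (f p) = p) /\ (forall p, f (g p) = p) /\
  tcontinuous f /\ tcontinuous g.

Definition mat_act (a b c d : Z) (v : R * R) : R * R :=
  (IZR a * fst v + IZR b * snd v, IZR c * fst v + IZR d * snd v).

Definition toral_map (a b c d : Z) (p : T2) : T2 :=
  proj (mat_act a b c d (proj1_sig p)).

Definition in_SL2Z (a b c d : Z) : Prop := (a * d - b * c = 1)%Z.

(** A is hyperbolic: |trace A| > 2 (for SL(2,Z): no eigenvalue of modulus 1). *)
Definition hyperbolic (a b c d : Z) : Prop := (Z.abs (a + d) > 2)%Z.

Definition is_eigenvalue (a b c d : Z) (lam : R) : Prop :=
  exists v : R * R, v <> (0, 0) /\ mat_act a b c d v = (lam * fst v, lam * snd v).

Inductive letter : Type := La | LaI | Lb | LbI.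
Definition word := list letter.

(** The presented group BS(1,n) = < a, b | a b a^-1 = b^n >:
    two words are equal in BS(1,n) iff related by [bs_eq], the congruence
    generated by free cancellation and the defining relation. *)
Definition bs_rule (n : nat) (l r : word) : Prop :=
  (l = La :: LaI :: nil /\ r = nil) \/
  (l = LaI :: La :: nil /\ r = nil) \/
  (l = Lb :: LbI :: nil /\ r = nil) \/
  (l = LbI :: Lb :: nil /\ r = nil) \/
  (l = La :: Lb :: LaI :: nil /\ r = repeat Lb n).

Inductive bs_eq (n : nat) : word -> word -> Prop :=
| bs_step : forall u v l r, bs_rule n l r -> bs_eq n (u ++ l ++ v) (u ++ r ++ v)
| bs_refl : forall w, bs_eq n w w
| bs_sym : forall w1 w2, bs_eq n w1 w2 -> bs_eq n w2 w1
| bs_trans : forall w1 w2 w3, bs_eq n w1 w2 -> bs_eq n w2 w3 -> bs_eq n w1 w3.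

(** Evaluation of a word under a -> h, b -> f (with given inverses):
    the word x1 x2 ... xk maps to phi(x1) o phi(x2) o ... o phi(xk). *)
Fixpoint eval_word {X : Type} (h hinv f finv : X -> X) (w : word) : X -> X :=
  match w with
  | nil => fun x => x
  | l :: w' => fun x =>
      let y := eval_word h hinv f finv w' x in
      match l with La => h y | LaI => hinv y | Lb => f y | LbI => finv y end
  end.

(* Main.v *)
Require Import Defs.
From Stdlib Require Import Reals Lra Lia ZArith List Classical ClassicalEpsilon FunctionalExtensionality ProofIrrelevance Znumtheory.
From Coquelicot Require Import Compactness.
Open Scope R_scope.

Open Scope R_scope.

Definition isZ (r : R) : Prop := exists z : Z, r = IZR z.

Lemma isZ_IZR z : isZ (IZR z). Proof. exists z; reflexivity. Qed.
Lemma isZ_0 : isZ 0. Proof. exists 0%Z; reflexivity. Qed.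
Lemma isZ_add r s : isZ r -> isZ s -> isZ (r + s).
Proof. intros [a ->] [b ->]; exists (a+b)%Z; rewrite plus_IZR; reflexivity. Qed.
Lemma isZ_opp r : isZ r -> isZ (- r).
Proof. intros [a ->]; exists (-a)%Z; rewrite opp_IZR; reflexivity. Qed.
Lemma isZ_sub r s : isZ r -> isZ s -> isZ (r - s).
Proof. intros; unfold Rminus; apply isZ_add; auto using isZ_opp. Qed.
Lemma isZ_mul r s : isZ r -> isZ s -> isZ (r * s).
Proof. intros [a ->] [b ->]; exists (a*b)%Z; rewrite mult_IZR; reflexivity. Qed.

Lemma isZ_small z : isZ z -> Rabs z < 1 -> z = 0.
Proof.
  intros [k ->] H. apply Rabs_def2 in H. destruct H as [H1 H2].
  assert (k < 1)%Z by (apply lt_IZR; lra).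
  assert (-1 < k)%Z by (apply lt_IZR; change (IZR (-1)) with (-(1)); lra).
  assert (k = 0)%Z by lia. subst; reflexivity.
Qed.

Lemma frac_isZ r : isZ (r - frac_part r).
Proof. unfold frac_part. exists (Int_part r). ring. Qed.

Lemma frac_char r t : isZ (r - t) -> 0 <= t < 1 -> frac_part r = t.
Proof.
  intros H Ht. pose proof (frac_part_range r).
  assert (isZ (frac_part r - t)).
  { replace (frac_part r - t) with ((r - t) - (r - frac_part r)) by ring.
    apply isZ_sub; auto using frac_isZ. }
  apply isZ_small in H1. lra. apply Rabs_def1; lra.
Qed.

Definition sd (r : R) : R :=
  if Rle_dec (frac_part r) (1/2) then frac_part r else frac_part r - 1.

Lemma sd_isZ r : isZ (r - sd r).
Proof.
  unfold sd. destruct Rle_dec.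
  - apply frac_isZ.
  - replace (r - (frac_part r - 1)) with ((r - frac_part r) + 1) by ring.
    apply isZ_add; [apply frac_isZ | exists 1%Z; reflexivity].
Qed.

Lemma sd_bound r : -1/2 < sd r <= 1/2.
Proof.
  pose proof (frac_part_range r). unfold sd. destruct Rle_dec; lra.
Qed.

Lemma sd_char r t : isZ (r - t) -> -1/2 < t <= 1/2 -> sd r = t.
Proof.
  intros H Ht. pose proof (sd_bound r).
  assert (isZ (sd r - t)).
  { replace (sd r - t) with ((r - t) - (r - sd r)) by ring.
    apply isZ_sub; auto using sd_isZ. }
  apply isZ_small in H1. lra. apply Rabs_def1; lra.
Qed.

Lemma sd_min u t : isZ (u - t) -> Rabs (sd u) <= Rabs t.
Proof.
  intros H. destruct (Rle_lt_dec (Rabs (sd u)) (Rabs t)) as [|Hl]; auto.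
  pose proof (sd_bound u).
  assert (Habs : Rabs (sd u) <= 1/2) by (apply Rabs_le; lra).
  assert (Rabs t < 1/2) by lra.
  apply Rabs_def2 in H1.
  rewrite (sd_char u t H) in Hl by lra. lra.
Qed.

Lemma sd_add r s : Rabs (sd r) < 1/4 -> Rabs (sd s) < 1/4 -> sd (r + s) = sd r + sd s.
Proof.
  intros H1 H2. apply sd_char.
  - replace (r + s - (sd r + sd s)) with ((r - sd r) + (s - sd s)) by ring.
    apply isZ_add; apply sd_isZ.
  - apply Rabs_def2 in H1; apply Rabs_def2 in H2. lra.
Qed.

Lemma sd_shift r z : isZ z -> sd (r + z) = sd r.
Proof.
  intros Hz. apply sd_char. 2: apply sd_bound.
  replace (r + z - sd r) with ((r - sd r) + z) by ring. apply isZ_add; auto using sd_isZ.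
Qed.

Lemma sd_0 : sd 0 = 0.
Proof. apply sd_char. replace (0-0) with 0 by ring; apply isZ_0. lra. Qed.

Lemma sd_le r : Rabs (sd r) <= Rabs r.
Proof. apply sd_min. replace (r - r) with 0 by ring; apply isZ_0. Qed.

Lemma sd_opp r : Rabs (sd (- r)) = Rabs (sd r).
Proof.
  apply Rle_antisym.
  - rewrite <- (Rabs_Ropp (sd r)). apply sd_min.
    replace (- r - - sd r) with (-(r - sd r)) by ring. apply isZ_opp, sd_isZ.
  - rewrite <- (Rabs_Ropp (sd (-r))). apply sd_min.
    replace (r - - sd (-r)) with (-(- r - sd (-r))) by ring. apply isZ_opp, sd_isZ.
Qed.

Lemma sd_tri r s : Rabs (sd (r + s)) <= Rabs (sd r) + Rabs (sd s).
Proof.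
  eapply Rle_trans. apply (sd_min _ (sd r + sd s)).
  replace (r + s - (sd r + sd s)) with ((r - sd r) + (s - sd s)) by ring.
  apply isZ_add; apply sd_isZ. apply Rabs_triang.
Qed.

Lemma circ_dist_sd x y : circ_dist x y = Rabs (sd (x - y)).
Proof.
  unfold circ_dist, sd. pose proof (frac_part_range (x - y)).
  destruct Rle_dec; unfold Rmin; destruct Rle_dec.
  - rewrite Rabs_right; lra.
  - lra.
  - rewrite Rabs_left; lra.
  - rewrite Rabs_left; lra.
Qed.

Definition vadd (x y : R * R) : R * R := (fst x + fst y, snd x + snd y).
Definition vsub (x y : R * R) : R * R := (fst x - fst y, snd x - snd y).
Definition vscale (t : R) (x : R * R) : R * R := (t * fst x, t * snd x).
Definition nrm (x : R * R) : R := Rmax (Rabs (fst x)) (Rabs (snd x)).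
Definition isZ2 (v : R * R) : Prop := isZ (fst v) /\ isZ (snd v).

Lemma vec_eq (x y : R * R) : fst x = fst y -> snd x = snd y -> x = y.
Proof. destruct x, y; simpl; intros -> ->; reflexivity. Qed.

Lemma nrm_ge0 x : 0 <= nrm x.
Proof. unfold nrm. eapply Rle_trans. apply Rabs_pos. apply Rmax_l. Qed.
Lemma nrm_fst x : Rabs (fst x) <= nrm x. Proof. apply Rmax_l. Qed.
Lemma nrm_snd x : Rabs (snd x) <= nrm x. Proof. apply Rmax_r. Qed.
Lemma nrm_lt x e : Rabs (fst x) < e -> Rabs (snd x) < e -> nrm x < e.
Proof. intros; unfold nrm; apply Rmax_lub_lt; auto. Qed.
Lemma nrm_le x e : Rabs (fst x) <= e -> Rabs (snd x) <= e -> nrm x <= e.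
Proof. intros; unfold nrm; apply Rmax_lub; auto. Qed.
Lemma nrm_tri x y : nrm (vadd x y) <= nrm x + nrm y.
Proof.
  apply nrm_le; simpl; (eapply Rle_trans; [apply Rabs_triang|]);
  apply Rplus_le_compat; auto using nrm_fst, nrm_snd.
Qed.
Lemma nrm_scale t x : nrm (vscale t x) = Rabs t * nrm x.
Proof.
  unfold nrm, vscale; simpl. rewrite !Rabs_mult.
  unfold Rmax. destruct (Rle_dec (Rabs (fst x)) (Rabs (snd x)));
  destruct (Rle_dec (Rabs t * Rabs (fst x)) (Rabs t * Rabs (snd x))); try reflexivity.
  - exfalso. apply n. apply Rmult_le_compat_l; auto using Rabs_pos.
  - pose proof (Rabs_pos t). destruct H. exfalso; apply n. apply Rmult_le_reg_l in r; lra.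
    rewrite <- H; ring.
Qed.
Lemma nrm_sub_sym x y : nrm (vsub x y) = nrm (vsub y x).
Proof.
  unfold nrm, vsub; simpl. rewrite (Rabs_minus_sym (fst x)), (Rabs_minus_sym (snd x)). reflexivity.
Qed.

Definition rep (p : T2) : R * R := proj1_sig p.

Lemma T2_eq (p q : T2) : rep p = rep q -> p = q.
Proof.
  destruct p as [x Hx], q as [y Hy]; unfold rep; simpl; intros ->.
  f_equal. apply proof_irrelevance.
Qed.

Lemma rep_range p : (0 <= fst (rep p) < 1) /\ (0 <= snd (rep p) < 1).
Proof. destruct p; simpl; auto. Qed.

Lemma rep_proj x : rep (proj x) = (frac_part (fst x), frac_part (snd x)).
Proof. reflexivity. Qed.

Lemma proj_rep p : proj (rep p) = p.
Proof.
  apply T2_eq. rewrite rep_proj. destruct (rep_range p) as [H1 H2].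
  apply vec_eq; simpl; apply frac_char; auto;
  replace (_ - _) with 0 by ring; apply isZ_0.
Qed.

Lemma proj_eq x y : isZ2 (vsub x y) -> proj x = proj y.
Proof.
  intros [H1 H2]. apply T2_eq. rewrite !rep_proj. simpl in *.
  apply vec_eq; simpl; apply frac_char; try apply frac_part_range.
  - replace (fst x - frac_part (fst y)) with ((fst x - fst y) + (fst y - frac_part (fst y))) by ring.
    apply isZ_add; auto using frac_isZ.
  - replace (snd x - frac_part (snd y)) with ((snd x - snd y) + (snd y - frac_part (snd y))) by ring.
    apply isZ_add; auto using frac_isZ.
Qed.

Lemma proj_eq_inv x y : proj x = proj y -> isZ2 (vsub x y).
Proof.
  intros H. assert (H' : rep (proj x) = rep (proj y)) by (rewrite H; reflexivity).
  rewrite !rep_proj in H'. inversion H' as [[E1 E2]].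
  split; simpl.
  - replace (fst x - fst y) with ((fst x - frac_part (fst x)) - (fst y - frac_part (fst y))) by (rewrite E1; ring).
    apply isZ_sub; apply frac_isZ.
  - replace (snd x - snd y) with ((snd x - frac_part (snd x)) - (snd y - frac_part (snd y))) by (rewrite E2; ring).
    apply isZ_sub; apply frac_isZ.
Qed.

Lemma isZ2_rep_proj x : isZ2 (vsub x (rep (proj x))).
Proof. rewrite rep_proj; split; simpl; apply frac_isZ. Qed.

Definition Dl (p q : T2) : R * R :=
  (sd (fst (rep p) - fst (rep q)), sd (snd (rep p) - snd (rep q))).

Lemma tdist_Dl p q : tdist p q = nrm (Dl p q).
Proof. unfold tdist, nrm, Dl; simpl. rewrite !circ_dist_sd. reflexivity. Qed.

Lemma proj_add_Dl x p q : proj x = q -> proj (vadd x (Dl p q)) = p.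
Proof.
  intros Hx. transitivity (proj (rep p)); [|apply proj_rep]. apply proj_eq.
  pose proof (proj_eq_inv _ _ (eq_trans Hx (eq_sym (proj_rep q)))) as [H1 H2].
  unfold Dl, vadd, vsub in *; simpl in *. split; simpl.
  - replace (fst x + sd (fst (rep p) - fst (rep q)) - fst (rep p)) with
      ((fst x - fst (rep q)) - ((fst (rep p) - fst (rep q)) - sd (fst (rep p) - fst (rep q)))) by ring.
    apply isZ_sub; auto using sd_isZ.
  - replace (snd x + sd (snd (rep p) - snd (rep q)) - snd (rep p)) with
      ((snd x - snd (rep q)) - ((snd (rep p) - snd (rep q)) - sd (snd (rep p) - snd (rep q)))) by ring.
    apply isZ_sub; auto using sd_isZ.
Qed.

Lemma Dl_add p q r : tdist p q < 1/4 -> tdist q r < 1/4 -> Dl p r = vadd (Dl p q) (Dl q r).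
Proof.
  rewrite !tdist_Dl. intros H1 H2.
  pose proof (nrm_fst (Dl p q)); pose proof (nrm_snd (Dl p q));
  pose proof (nrm_fst (Dl q r)); pose proof (nrm_snd (Dl q r)).
  unfold Dl, vadd in *; simpl in *. apply vec_eq; simpl.
  - rewrite <- sd_add by lra. f_equal; ring.
  - rewrite <- sd_add by lra. f_equal; ring.
Qed.

Lemma Dl_self p : Dl p p = (0,0).
Proof. unfold Dl. rewrite !Rminus_diag, sd_0. reflexivity. Qed.

Lemma tdist_sym p q : tdist p q = tdist q p.
Proof.
  rewrite !tdist_Dl. unfold nrm, Dl; simpl.
  rewrite <- (sd_opp (fst (rep q) - _)), <- (sd_opp (snd (rep q) - _)).
  do 2 f_equal; f_equal; f_equal; ring.
Qed.

Lemma tdist_tri p q r : tdist p r <= tdist p q + tdist q r.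
Proof.
  rewrite !tdist_Dl. unfold nrm, Dl; simpl.
  apply Rmax_lub.
  - eapply Rle_trans. 2: apply Rplus_le_compat; apply Rmax_l.
    replace (fst (rep p) - fst (rep r)) with ((fst (rep p) - fst (rep q)) + (fst (rep q) - fst (rep r))) by ring.
    apply sd_tri.
  - eapply Rle_trans. 2: apply Rplus_le_compat; apply Rmax_r.
    replace (snd (rep p) - snd (rep r)) with ((snd (rep p) - snd (rep q)) + (snd (rep q) - snd (rep r))) by ring.
    apply sd_tri.
Qed.

Lemma tdist_self p : tdist p p = 0.
Proof. rewrite tdist_Dl, Dl_self. unfold nrm; simpl. rewrite Rabs_R0. apply Rmax_left; lra. Qed.

Lemma tdist_proj x y : tdist (proj x) (proj y) <= nrm (vsub x y).
Proof.
  rewrite tdist_Dl. unfold Dl. rewrite !rep_proj. simpl. apply nrm_le; simpl.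
  - eapply Rle_trans. apply (sd_min _ (fst x - fst y)).
    replace (frac_part (fst x) - frac_part (fst y) - (fst x - fst y)) with
      (-( (fst x - frac_part (fst x)) - (fst y - frac_part (fst y)))) by ring.
    apply isZ_opp, isZ_sub; apply frac_isZ. apply (nrm_fst (vsub x y)).
  - eapply Rle_trans. apply (sd_min _ (snd x - snd y)).
    replace (frac_part (snd x) - frac_part (snd y) - (snd x - snd y)) with
      (-( (snd x - frac_part (snd x)) - (snd y - frac_part (snd y)))) by ring.
    apply isZ_opp, isZ_sub; apply frac_isZ. apply (nrm_snd (vsub x y)).
Qed.

Lemma tdist_ge0 p q : 0 <= tdist p q.
Proof. rewrite tdist_Dl; apply nrm_ge0. Qed.

Open Scope R_scope.

Lemma unif_cont (f : T2 -> T2) : tcontinuous f -> forall eps, 0 < eps ->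
  exists delta, 0 < delta /\ forall p q, tdist p q < delta -> tdist (f p) (f q) < eps.
Proof.
  intros Hf eps Heps.
  pose (cpt := fun t : Tn 2 R => proj (fst t, fst (snd t))).
  assert (Hd : forall t : Tn 2 R, { d : R | 0 < d /\ forall q, tdist (cpt t) q < d ->
              tdist (f (cpt t)) (f q) < eps / 2 }).
  { intros t. apply constructive_indefinite_description. apply Hf. lra. }
  pose (delta := fun t => mkposreal (proj1_sig (Hd t) / 2)
          (Rdiv_lt_0_compat _ _ (proj1 (proj2_sig (Hd t))) Rlt_0_2)).
  destruct (compactness_value 2 (0,(0,tt)) (1,(1,tt)) delta) as [d Hcd].
  exists (pos d). split. apply cond_pos.
  intros p q Hpq.
  destruct (rep_range p) as [Hp1 Hp2].
  specialize (Hcd (fst (rep p), (snd (rep p), tt))).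
  apply NNPP. intro Hn. apply Hcd. { simpl. repeat split; lra. }
  intros [t [Hbt [Hct Hdt]]]. apply Hn.
  destruct t as [t1 [t2 []]]. simpl in Hct. destruct Hct as [Hc1 [Hc2 _]].
  unfold delta in *; simpl in *.
  destruct (Hd (t1, (t2, tt))) as [dt [Hdt0 Hdt1]]; simpl in *.
  assert (E1 : tdist (cpt (t1,(t2,tt))) p < dt / 2).
  { unfold cpt; simpl. replace (tdist (proj (t1, t2)) p) with (tdist (proj (t1, t2)) (proj (rep p))) by (rewrite proj_rep; reflexivity).
    eapply Rle_lt_trans. apply tdist_proj. apply nrm_lt; simpl.
    rewrite Rabs_minus_sym; auto. rewrite Rabs_minus_sym; auto. }
  assert (E2 : tdist (cpt (t1,(t2,tt))) q < dt).
  { eapply Rle_lt_trans. apply (tdist_tri _ p). lra. }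
  pose proof (Hdt1 p ltac:(lra)). pose proof (Hdt1 q E2).
  eapply Rle_lt_trans. apply (tdist_tri _ (f (cpt (t1,(t2,tt))))).
  rewrite tdist_sym. lra.
Qed.

Open Scope R_scope.

Fixpoint chain (g : nat -> T2) (k : nat) : R * R :=
  match k with
  | O => rep (g O)
  | S k' => vadd (chain g k') (Dl (g (S k')) (g k'))
  end.

Lemma chain_proj g k : proj (chain g k) = g k.
Proof.
  induction k; simpl. apply proj_rep. apply proj_add_Dl; auto.
Qed.

Lemma chain_S g k : chain g (S k) = vadd (chain g k) (Dl (g (S k)) (g k)).
Proof. reflexivity. Qed.

Lemma chain_refine g k :
  (forall i, (i < k)%nat -> tdist (g (S (2*i))) (g (2*i)%nat) < 1/4 /\
                         tdist (g (S (S (2*i)))) (g (S (2*i))) < 1/4) ->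
  chain g (2*k) = chain (fun i => g (2*i)%nat) k.
Proof.
  induction k; intros H. reflexivity.
  replace (2 * S k)%nat with (S (S (2*k))) by lia. rewrite !chain_S.
  rewrite IHk by (intros; apply H; lia).
  destruct (H k ltac:(lia)) as [H1 H2].
  replace (S (2*k)) with (2*k+1)%nat in * by lia.
  replace (S (2*k+1)) with (2*(S k))%nat in * by lia.
  rewrite (Dl_add (g (2 * S k)%nat) (g (2*k+1)%nat) (g (2*k)%nat)) by auto.
  apply vec_eq; simpl; ring.
Qed.

Definition pathpt (f : T2 -> T2) (N : nat) (x : R * R) (i : nat) : T2 :=
  f (proj (vscale (INR i / INR N) x)).

Definition Sp f N x := chain (pathpt f N x) N.

Lemma vsub_scale s t x : vsub (vscale s x) (vscale t x) = vscale (s - t) x.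
Proof. apply vec_eq; simpl; ring. Qed.
Lemma vsub_scale2 t x y : vsub (vscale t y) (vscale t x) = vscale t (vsub y x).
Proof. apply vec_eq; simpl; ring. Qed.

Definition ucont8 (f : T2 -> T2) (d0 : R) :=
  0 < d0 /\ forall p q, tdist p q < d0 -> tdist (f p) (f q) < 1/8.

Lemma path_step f d0 N x i : ucont8 f d0 -> (0 < N)%nat -> nrm x / INR N < d0 ->
  tdist (pathpt f N x (S i)) (pathpt f N x i) < 1/8.
Proof.
  intros [Hd0 Hu] HN Hx. apply Hu. eapply Rle_lt_trans. apply tdist_proj.
  rewrite vsub_scale, nrm_scale.
  assert (0 < INR N) by (apply lt_0_INR; lia).
  replace (INR (S i) / INR N - INR i / INR N) with (/ INR N) by (rewrite S_INR; field; lra).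
  rewrite Rabs_right by (apply Rle_ge, Rlt_le, Rinv_0_lt_compat; lra).
  unfold Rdiv in Hx. lra.
Qed.

Lemma Sp_double f d0 N x : ucont8 f d0 -> (0 < N)%nat -> nrm x / INR N < d0 ->
  Sp f (2*N) x = Sp f N x.
Proof.
  intros Hu HN Hx. unfold Sp.
  assert (HN2 : (0 < 2*N)%nat) by lia.
  assert (Hx2 : nrm x / INR (2*N) < d0).
  { rewrite mult_INR. pose proof (nrm_ge0 x). assert (0 < INR N) by (apply lt_0_INR; lia).
    simpl. unfold Rdiv in *. rewrite Rinv_mult.
    replace (nrm x * (/ (1+1) * / INR N)) with (/2 * (nrm x * / INR N)) by (field; lra).
    assert (0 <= nrm x * / INR N) by (apply Rmult_le_pos; auto; left; apply Rinv_0_lt_compat; lra). lra. }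
  rewrite chain_refine.
  - apply f_equal2; [|reflexivity]. apply functional_extensionality. intros i.
    unfold pathpt. do 3 f_equal. rewrite !mult_INR. simpl. field. apply not_0_INR; lia.
  - intros i _. split; (eapply Rlt_trans; [apply (path_step f d0); auto|lra]).
Qed.

Lemma Sp_ladder f d0 N x y : ucont8 f d0 -> (0 < N)%nat -> nrm x / INR N < d0 ->
  nrm y / INR N < d0 -> nrm (vsub y x) < d0 ->
  Sp f N y = vadd (Sp f N x) (Dl (f (proj y)) (f (proj x))).
Proof.
  intros Hu HN Hx Hy Hxy. unfold Sp.
  assert (HNp : 0 < INR N) by (apply lt_0_INR; lia).
  assert (Hab : forall k, (k <= N)%nat -> tdist (pathpt f N y k) (pathpt f N x k) < 1/8).
  { intros k Hk. apply (proj2 Hu). eapply Rle_lt_trans. apply tdist_proj.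
    rewrite vsub_scale2, nrm_scale.
    assert (0 <= INR k / INR N <= 1).
    { split. apply Rle_mult_inv_pos; auto; apply pos_INR.
      apply Rmult_le_reg_r with (INR N); auto. unfold Rdiv. rewrite Rmult_assoc, Rinv_l by lra.
      rewrite Rmult_1_r, Rmult_1_l. apply le_INR; auto. }
    rewrite Rabs_right by lra. pose proof (nrm_ge0 (vsub y x)).
    apply Rle_lt_trans with (1 * nrm (vsub y x)). apply Rmult_le_compat_r; lra. lra. }
  assert (Hind : forall k, (k <= N)%nat ->
     chain (pathpt f N y) k = vadd (chain (pathpt f N x) k) (Dl (pathpt f N y k) (pathpt f N x k))).
  { induction k; intros Hk.
    - simpl. unfold pathpt. simpl. unfold Rdiv. rewrite Rmult_0_l.
      replace (vscale 0 y) with (vscale 0 x) by (apply vec_eq; simpl; ring).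
      rewrite Dl_self. destruct (rep _); apply vec_eq; simpl; ring.
    - rewrite !chain_S, IHk by lia.
      pose proof (Hab k ltac:(lia)). pose proof (Hab (S k) Hk).
      pose proof (path_step f d0 N x k Hu HN Hx). pose proof (path_step f d0 N y k Hu HN Hy).
      pose proof (Dl_add (pathpt f N y (S k)) (pathpt f N x (S k)) (pathpt f N x k) ltac:(lra) ltac:(lra)) as E1.
      pose proof (Dl_add (pathpt f N y (S k)) (pathpt f N y k) (pathpt f N x k) ltac:(lra) ltac:(lra)) as E2.
      rewrite E1 in E2.
      apply vec_eq; [apply (f_equal fst) in E2 | apply (f_equal snd) in E2]; simpl in *; lra. }
  rewrite Hind by lia. unfold pathpt. rewrite Rdiv_diag by lra.
  replace (vscale 1 y) with y by (apply vec_eq; simpl; ring).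
  replace (vscale 1 x) with x by (apply vec_eq; simpl; ring). reflexivity.
Qed.

Open Scope R_scope.

Definition rcont (G : R * R -> R * R) : Prop :=
  forall x eps, 0 < eps -> exists delta, 0 < delta /\
    forall y, nrm (vsub y x) < delta -> nrm (vsub (G y) (G x)) < eps.

Definition lift (g : T2 -> T2) (G : R * R -> R * R) : Prop :=
  rcont G /\ forall x, proj (G x) = g (proj x).

Definition Kx (d0 : R) (x : R * R) : nat := Z.to_nat (up (nrm x / d0)).
Definition Flift f d0 x := Sp f (2 ^ Kx d0 x) x.

Lemma Kx_valid d0 x k : 0 < d0 -> (Kx d0 x <= k)%nat -> nrm x / INR (2 ^ k) < d0.
Proof.
  intros Hd Hk. unfold Kx in Hk.
  pose proof (nrm_ge0 x). pose proof (archimed (nrm x / d0)) as [H1 _].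
  assert (0 <= nrm x / d0) by (apply Rle_mult_inv_pos; lra).
  assert (Hup : (0 < up (nrm x / d0))%Z) by (apply lt_IZR; simpl; lra).
  assert (E : INR (Z.to_nat (up (nrm x / d0))) = IZR (up (nrm x / d0))).
  { rewrite INR_IZR_INZ, Z2Nat.id by lia. reflexivity. }
  assert (Hlt : (k < 2 ^ k)%nat) by (apply Nat.pow_gt_lin_r; lia).
  apply le_INR in Hk. apply lt_INR in Hlt. rewrite E in Hk.
  assert (nrm x / d0 < INR (2^k)) by lra.
  apply Rmult_lt_reg_r with (INR (2^k) / d0). apply Rdiv_lt_0_compat; lra.
  replace (nrm x / INR (2 ^ k) * (INR (2 ^ k) / d0)) with (nrm x / d0) by (field; lra).
  replace (d0 * (INR (2 ^ k) / d0)) with (INR (2^k)) by (field; lra). lra.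
Qed.

Lemma Sp_stable f d0 x k : ucont8 f d0 -> (Kx d0 x <= k)%nat -> Sp f (2 ^ k) x = Flift f d0 x.
Proof.
  intros Hu Hk. induction Hk. reflexivity.
  rewrite <- IHHk. rewrite Nat.pow_succ_r'. apply (Sp_double f d0). auto.
  pose proof (Nat.pow_nonzero 2 m). lia. apply Kx_valid; auto. apply Hu.
Qed.

Lemma Flift_local f d0 x y : ucont8 f d0 -> nrm (vsub y x) < d0 ->
  Flift f d0 y = vadd (Flift f d0 x) (Dl (f (proj y)) (f (proj x))).
Proof.
  intros Hu Hxy. set (k := Nat.max (Kx d0 x) (Kx d0 y)).
  rewrite <- (Sp_stable f d0 x k), <- (Sp_stable f d0 y k) by (auto; lia).
  apply (Sp_ladder f d0); auto. pose proof (Nat.pow_nonzero 2 k). lia.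
  apply Kx_valid; [apply Hu|lia]. apply Kx_valid; [apply Hu|lia].
Qed.

Lemma Flift_proj f d0 x : proj (Flift f d0 x) = f (proj x).
Proof.
  unfold Flift, Sp. rewrite chain_proj. unfold pathpt.
  rewrite Rdiv_diag. replace (vscale 1 x) with x by (apply vec_eq; simpl; ring). reflexivity.
  apply not_0_INR. apply Nat.pow_nonzero. lia.
Qed.

Lemma vsub_vadd a b : vsub (vadd a b) a = b.
Proof. apply vec_eq; simpl; ring. Qed.

Lemma nrm_Dl_le p q : nrm (Dl p q) <= 1/2.
Proof.
  unfold Dl, nrm; simpl. pose proof (sd_bound (fst (rep p) - fst (rep q))).
  pose proof (sd_bound (snd (rep p) - snd (rep q))).
  apply Rmax_lub; apply Rabs_le; lra.
Qed.

Lemma lift_exists (f : T2 -> T2) : tcontinuous f ->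
  exists F, lift f F /\ exists d, 0 < d /\ forall x y, nrm (vsub y x) < d -> nrm (vsub (F y) (F x)) <= 1/2.
Proof.
  intros Hf. destruct (unif_cont f Hf (1/8) ltac:(lra)) as [d0 [Hd0 Hu]].
  assert (Hu8 : ucont8 f d0) by (split; auto).
  exists (Flift f d0). split; [split|].
  - intros x eps Heps. destruct (Hf (proj x) eps Heps) as [d1 [Hd1 Hc]].
    exists (Rmin d0 d1). split. apply Rmin_pos; auto.
    intros y Hy. rewrite (Flift_local f d0 x y Hu8) by (eapply Rlt_le_trans; [apply Hy|apply Rmin_l]).
    rewrite vsub_vadd, <- tdist_Dl, tdist_sym. apply Hc.
    eapply Rle_lt_trans. apply tdist_proj. rewrite nrm_sub_sym.
    eapply Rlt_le_trans; [apply Hy|apply Rmin_r].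
  - apply Flift_proj.
  - exists d0. split; auto. intros x y Hxy. rewrite (Flift_local f d0 x y Hu8 Hxy), vsub_vadd.
    apply nrm_Dl_le.
Qed.

Open Scope R_scope.

Lemma rcont_coord (G : R * R -> R * R) x : rcont G ->
  continuity (fun t => fst (G (vscale t x))) /\ continuity (fun t => snd (G (vscale t x))).
Proof.
  intros HG. split; intros t; unfold continuity_pt, continue_in, limit1_in, limit_in, D_x, no_cond;
  simpl; unfold R_dist; intros eps Heps;
  destruct (HG (vscale t x) eps Heps) as [d [Hd HGd]];
  exists (d / (nrm x + 1)); (split; [apply Rdiv_lt_0_compat; pose proof (nrm_ge0 x); lra|]);
  intros y [_ Hy].
  - eapply Rle_lt_trans. 2: apply (HGd (vscale y x)). apply (nrm_fst (vsub _ _)).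
    rewrite vsub_scale, nrm_scale. pose proof (nrm_ge0 x).
    apply Rle_lt_trans with (Rabs (y - t) * (nrm x + 1)). apply Rmult_le_compat_l; auto using Rabs_pos; lra.
    apply Rmult_lt_reg_r with (/ (nrm x + 1)). apply Rinv_0_lt_compat; lra.
    rewrite Rmult_assoc, Rinv_r, Rmult_1_r by lra. apply Hy.
  - eapply Rle_lt_trans. 2: apply (HGd (vscale y x)). apply (nrm_snd (vsub _ _)).
    rewrite vsub_scale, nrm_scale. pose proof (nrm_ge0 x).
    apply Rle_lt_trans with (Rabs (y - t) * (nrm x + 1)). apply Rmult_le_compat_l; auto using Rabs_pos; lra.
    apply Rmult_lt_reg_r with (/ (nrm x + 1)). apply Rinv_0_lt_compat; lra.
    rewrite Rmult_assoc, Rinv_r, Rmult_1_r by lra. apply Hy.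
Qed.

Lemma int_cont_const (phi : R -> R) : continuity phi -> (forall t, isZ (phi t)) -> phi 1 = phi 0.
Proof.
  intros Hc Hz.
  destruct (Req_dec (phi 1) (phi 0)) as [|Hne]; auto. exfalso.
  assert (Hd : isZ (phi 1 - phi 0)) by (apply isZ_sub; auto).
  assert (H1 : 1 <= Rabs (phi 1 - phi 0)).
  { destruct (Rlt_le_dec (Rabs (phi 1 - phi 0)) 1); auto. apply isZ_small in Hd; auto. lra. }
  destruct (Rle_lt_dec 0 (phi 1 - phi 0)).
  - rewrite Rabs_right in H1 by lra.
    destruct (IVT (fun t => phi t - (phi 0 + 1/2)) 0 1) as [z [_ Hz0]].
    + apply continuity_minus; auto. apply continuity_const. intros ? ?; reflexivity.
    + lra. + lra. + lra.
    + assert (isZ (phi z - phi 0)) by (apply isZ_sub; auto).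
      apply isZ_small in H. lra. rewrite Rabs_right; lra.
  - rewrite Rabs_left in H1 by lra.
    destruct (IVT (fun t => (phi 0 - 1/2) - phi t) 0 1) as [z [_ Hz0]].
    + apply continuity_minus; auto. apply continuity_const. intros ? ?; reflexivity.
    + lra. + lra. + lra.
    + assert (isZ (phi z - phi 0)) by (apply isZ_sub; auto).
      apply isZ_small in H. lra. rewrite Rabs_left; lra.
Qed.

Lemma int_rcont_const (G : R * R -> R * R) : rcont G -> (forall x, isZ2 (G x)) ->
  forall x, G x = G (0,0).
Proof.
  intros HG Hz x. destruct (rcont_coord G x HG) as [H1 H2].
  pose proof (int_cont_const _ H1 (fun t => proj1 (Hz _))) as E1.
  pose proof (int_cont_const _ H2 (fun t => proj2 (Hz _))) as E2.
  simpl in E1, E2.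
  replace (vscale 1 x) with x in * by (apply vec_eq; simpl; ring).
  replace (vscale 0 x) with (0,0) in * by (apply vec_eq; simpl; ring).
  apply vec_eq; auto.
Qed.

Lemma rcont_sub G1 G2 : rcont G1 -> rcont G2 -> rcont (fun x => vsub (G1 x) (G2 x)).
Proof.
  intros H1 H2 x eps Heps.
  destruct (H1 x (eps/2) ltac:(lra)) as [d1 [Hd1 K1]].
  destruct (H2 x (eps/2) ltac:(lra)) as [d2 [Hd2 K2]].
  exists (Rmin d1 d2). split. apply Rmin_pos; auto. intros y Hy.
  pose proof (K1 y (Rlt_le_trans _ _ _ Hy (Rmin_l _ _))).
  pose proof (K2 y (Rlt_le_trans _ _ _ Hy (Rmin_r _ _))).
  replace (vsub (vsub (G1 y) (G2 y)) (vsub (G1 x) (G2 x))) with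
    (vadd (vsub (G1 y) (G1 x)) (vscale (-1) (vsub (G2 y) (G2 x)))) by (apply vec_eq; simpl; ring).
  eapply Rle_lt_trans. apply nrm_tri. rewrite nrm_scale. replace (Rabs (-1)) with 1 by (unfold Rabs; destruct Rcase_abs; lra). lra.
Qed.

Lemma lift_unique g G1 G2 : lift g G1 -> lift g G2 ->
  exists v, isZ2 v /\ forall x, G1 x = vadd (G2 x) v.
Proof.
  intros [C1 P1] [C2 P2].
  assert (Hz : forall x, isZ2 (vsub (G1 x) (G2 x))).
  { intros x. apply proj_eq_inv. rewrite P1, P2. reflexivity. }
  pose proof (int_rcont_const _ (rcont_sub _ _ C1 C2) Hz) as E.
  exists (vsub (G1 (0,0)) (G2 (0,0))). split. apply Hz.
  intros x. rewrite <- (E x). apply vec_eq; simpl; ring.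
Qed.

Lemma rcont_comp G1 G2 : rcont G1 -> rcont G2 -> rcont (fun x => G1 (G2 x)).
Proof.
  intros H1 H2 x eps Heps.
  destruct (H1 (G2 x) eps Heps) as [d1 [Hd1 K1]].
  destruct (H2 x d1 Hd1) as [d2 [Hd2 K2]].
  exists d2. split; auto.
Qed.

Lemma rcont_id : rcont (fun x => x).
Proof. intros x eps Heps. exists eps. split; auto. Qed.

Lemma rcont_transl G w : rcont G -> rcont (fun x => vadd (G x) w).
Proof.
  intros H x eps Heps. destruct (H x eps Heps) as [d [Hd K]]. exists d. split; auto.
  intros y Hy. replace (vsub (vadd (G y) w) (vadd (G x) w)) with (vsub (G y) (G x)) by (apply vec_eq; simpl; ring).
  auto.
Qed.

Lemma mat_act_sub a b c d x y : vsub (mat_act a b c d y) (mat_act a b c d x) = mat_act a b c d (vsub y x).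
Proof. apply vec_eq; unfold mat_act; simpl; ring. Qed.

Lemma nrm_mat a b c d v :
  nrm (mat_act a b c d v) <= (Rabs (IZR a) + Rabs (IZR b) + Rabs (IZR c) + Rabs (IZR d)) * nrm v.
Proof.
  pose proof (nrm_fst v). pose proof (nrm_snd v). pose proof (nrm_ge0 v).
  pose proof (Rabs_pos (IZR a)). pose proof (Rabs_pos (IZR b)).
  pose proof (Rabs_pos (IZR c)). pose proof (Rabs_pos (IZR d)).
  apply nrm_le; unfold mat_act; simpl.
  - eapply Rle_trans. apply Rabs_triang. rewrite !Rabs_mult.
    assert (Rabs (IZR a) * Rabs (fst v) <= Rabs (IZR a) * nrm v) by (apply Rmult_le_compat_l; auto).
    assert (Rabs (IZR b) * Rabs (snd v) <= Rabs (IZR b) * nrm v) by (apply Rmult_le_compat_l; auto).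
    nra.
  - eapply Rle_trans. apply Rabs_triang. rewrite !Rabs_mult.
    assert (Rabs (IZR c) * Rabs (fst v) <= Rabs (IZR c) * nrm v) by (apply Rmult_le_compat_l; auto).
    assert (Rabs (IZR d) * Rabs (snd v) <= Rabs (IZR d) * nrm v) by (apply Rmult_le_compat_l; auto).
    nra.
Qed.

Lemma rcont_mat a b c d : rcont (mat_act a b c d).
Proof.
  intros x eps Heps.
  set (K := Rabs (IZR a) + Rabs (IZR b) + Rabs (IZR c) + Rabs (IZR d)).
  assert (0 <= K) by (unfold K; pose proof (Rabs_pos (IZR a)); pose proof (Rabs_pos (IZR b));
    pose proof (Rabs_pos (IZR c)); pose proof (Rabs_pos (IZR d)); lra).
  exists (eps / (K + 1)). split. apply Rdiv_lt_0_compat; lra.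
  intros y Hy. rewrite mat_act_sub. eapply Rle_lt_trans. apply nrm_mat. fold K.
  pose proof (nrm_ge0 (vsub y x)).
  apply Rle_lt_trans with ((K + 1) * nrm (vsub y x)). apply Rmult_le_compat_r; lra.
  apply Rmult_lt_reg_r with (/ (K+1)). apply Rinv_0_lt_compat; lra.
  rewrite Rmult_comm, <- Rmult_assoc, Rinv_l, Rmult_1_l by lra. apply Hy.
Qed.

Lemma rcont_iter G k : rcont G -> rcont (Nat.iter k G).
Proof.
  intros H. induction k; simpl. apply rcont_id. apply (rcont_comp G _ H IHk).
Qed.

Lemma lift_comp g1 g2 G1 G2 : lift g1 G1 -> lift g2 G2 -> lift (fun p => g1 (g2 p)) (fun x => G1 (G2 x)).
Proof.
  intros [C1 P1] [C2 P2]. split. apply rcont_comp; auto. intros x. rewrite P1, P2. reflexivity.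
Qed.

Lemma lift_id : lift (fun p => p) (fun x => x).
Proof. split. apply rcont_id. reflexivity. Qed.

Lemma lift_iter g G k : lift g G -> lift (Nat.iter k g) (Nat.iter k G).
Proof.
  intros HL. induction k; simpl. apply lift_id. apply (lift_comp g _ G _ HL IHk).
Qed.

Lemma lift_transl g G w : lift g G -> isZ2 w -> lift g (fun x => vadd (G x) w).
Proof.
  intros [C P] Hw. split. apply rcont_transl; auto.
  intros x. rewrite <- P. apply proj_eq. destruct Hw; split; simpl;
  [replace (fst (G x) + fst w - fst (G x)) with (fst w) by ring|
   replace (snd (G x) + snd w - snd (G x)) with (snd w) by ring]; auto.
Qed.

Lemma mat_act_isZ2 a b c d v : isZ2 v -> isZ2 (mat_act a b c d v).
Proof.
  intros [H1 H2]. unfold mat_act; split; simpl;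
  apply isZ_add; apply isZ_mul; auto using isZ_IZR.
Qed.

Lemma lift_toral a b c d : lift (toral_map a b c d) (mat_act a b c d).
Proof.
  split. apply rcont_mat. intros x. unfold toral_map. apply proj_eq.
  rewrite mat_act_sub. apply mat_act_isZ2.
  destruct (isZ2_rep_proj x) as [H1 H2]. split; auto.
Qed.

Open Scope R_scope.

Record M2 := mkM { m11 : Z; m12 : Z; m21 : Z; m22 : Z }.
Definition mact (M : M2) := mat_act (m11 M) (m12 M) (m21 M) (m22 M).
Definition mmul (M N : M2) : M2 :=
  mkM (m11 M * m11 N + m12 M * m21 N)%Z (m11 M * m12 N + m12 M * m22 N)%Z
      (m21 M * m11 N + m22 M * m21 N)%Z (m21 M * m12 N + m22 M * m22 N)%Z.
Definition mid : M2 := mkM 1 0 0 1.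
Fixpoint mpow (M : M2) (k : nat) : M2 :=
  match k with O => mid | S k' => mmul M (mpow M k') end.

Lemma mact_mul M N v : mact (mmul M N) v = mact M (mact N v).
Proof.
  destruct M, N; unfold mact, mmul, mat_act; simpl. apply vec_eq; simpl;
  rewrite !plus_IZR, !mult_IZR; ring.
Qed.
Lemma mact_id v : mact mid v = v.
Proof. unfold mact, mat_act; simpl; apply vec_eq; simpl; ring. Qed.
Lemma mact_add M x y : mact M (vadd x y) = vadd (mact M x) (mact M y).
Proof. unfold mact, mat_act, vadd; apply vec_eq; simpl; ring. Qed.
Lemma mact_scale M t x : mact M (vscale t x) = vscale t (mact M x).
Proof. unfold mact, mat_act, vscale; apply vec_eq; simpl; ring. Qed.
Lemma mact_isZ2 M v : isZ2 v -> isZ2 (mact M v).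
Proof. apply mat_act_isZ2. Qed.

Definition linpart (G : R * R -> R * R) (M : M2) : Prop :=
  forall x m, isZ2 m -> G (vadd x m) = vadd (G x) (mact M m).

Lemma shift_nat G w b : (forall x, G (vadd x w) = vadd (G x) b) ->
  forall k x, G (vadd x (vscale (INR k) w)) = vadd (G x) (vscale (INR k) b).
Proof.
  intros H. induction k; intros x.
  - simpl. replace (vadd x (vscale 0 w)) with x by (apply vec_eq; simpl; ring).
    apply vec_eq; simpl; ring.
  - replace (vadd x (vscale (INR (S k)) w)) with (vadd (vadd x (vscale (INR k) w)) w)
      by (rewrite S_INR; apply vec_eq; simpl; ring).
    rewrite H, IHk. rewrite S_INR; apply vec_eq; simpl; ring.
Qed.

Lemma shift_Z G w b : (forall x, G (vadd x w) = vadd (G x) b) ->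
  forall z x, G (vadd x (vscale (IZR z) w)) = vadd (G x) (vscale (IZR z) b).
Proof.
  intros H z x. destruct (Z_le_gt_dec 0 z).
  - replace (IZR z) with (INR (Z.to_nat z)) by (rewrite INR_IZR_INZ, Z2Nat.id; auto).
    apply shift_nat; auto.
  - replace (IZR z) with (- INR (Z.to_nat (- z))) by (rewrite INR_IZR_INZ, Z2Nat.id by lia; rewrite opp_IZR; ring).
    set (k := Z.to_nat (-z)).
    pose proof (shift_nat G w b H k (vadd x (vscale (- INR k) w))) as E.
    replace (vadd (vadd x (vscale (- INR k) w)) (vscale (INR k) w)) with x in E by (apply vec_eq; simpl; ring).
    rewrite E. apply vec_eq; simpl; ring.
Qed.

Lemma isZ_inv r : isZ r -> exists z, r = IZR z. Proof. auto. Qed.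

Lemma lift_linpart g G : lift g G -> exists M, linpart G M.
Proof.
  intros HL.
  assert (Hsh : forall m, isZ2 m -> exists v, isZ2 v /\ forall x, G (vadd x m) = vadd (G x) v).
  { intros m Hm. apply (lift_unique g). 2: auto. destruct HL as [C P]. split.
    - apply (rcont_comp G (fun x => vadd x m)); auto. apply (rcont_transl (fun x => x)), rcont_id.
    - intros x. rewrite P. f_equal. apply proj_eq. destruct Hm; split; simpl;
      [replace (fst x + fst m - fst x) with (fst m) by ring | replace (snd x + snd m - snd x) with (snd m) by ring]; auto. }
  destruct (Hsh (1,0)) as [b1 [[[p1 E1] [q1 F1]] H1]]. split; simpl; [exists 1%Z|exists 0%Z]; reflexivity.
  destruct (Hsh (0,1)) as [b2 [[[p2 E2] [q2 F2]] H2]]. split; simpl; [exists 0%Z|exists 1%Z]; reflexivity.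
  exists (mkM p1 p2 q1 q2). intros x m [[p Hp] [q Hq]].
  replace (vadd x m) with (vadd (vadd x (vscale (IZR p) (1,0))) (vscale (IZR q) (0,1)))
    by (apply vec_eq; simpl; rewrite <- Hp, <- Hq; ring).
  rewrite (shift_Z G _ _ H2), (shift_Z G _ _ H1).
  destruct b1, b2; unfold mact, mat_act; simpl in *; subst. apply vec_eq; simpl; rewrite Hp, Hq; ring.
Qed.

Lemma linpart_comp G1 G2 M1 M2' : linpart G1 M1 -> linpart G2 M2' ->
  linpart (fun x => G1 (G2 x)) (mmul M1 M2').
Proof.
  intros H1 H2 x m Hm. rewrite H2, H1 by (auto using mact_isZ2). rewrite mact_mul. reflexivity.
Qed.

Lemma linpart_iter G M k : linpart G M -> linpart (Nat.iter k G) (mpow M k).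
Proof.
  intros H. induction k.
  - intros x m _. simpl. rewrite mact_id. reflexivity.
  - intros x m Hm. change (Nat.iter (S k) G (vadd x m)) with (G (Nat.iter k G (vadd x m))).
    change (Nat.iter (S k) G x) with (G (Nat.iter k G x)).
    rewrite IHk, H by (auto using mact_isZ2). simpl mpow. rewrite mact_mul. reflexivity.
Qed.

Lemma linpart_transl G M w : linpart G M -> linpart (fun x => vadd (G x) w) M.
Proof. intros H x m Hm. rewrite H by auto. apply vec_eq; simpl; ring. Qed.

Lemma linpart_unique G M N : linpart G M -> linpart G N -> M = N.
Proof.
  intros H1 H2.
  assert (E : forall m, isZ2 m -> mact M m = mact N m).
  { intros m Hm. pose proof (H1 (0,0) m Hm). pose proof (H2 (0,0) m Hm). rewrite H in H0.
    apply (f_equal (fun v => vsub v (G (0,0)))) in H0. rewrite !vsub_vadd in H0. auto. }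
  assert (Z1 : isZ2 (1,0)) by (split; simpl; [exists 1%Z|exists 0%Z]; reflexivity).
  assert (Z2 : isZ2 (0,1)) by (split; simpl; [exists 0%Z|exists 1%Z]; reflexivity).
  pose proof (E _ Z1) as A1. pose proof (E _ Z2) as A2.
  destruct M, N; unfold mact, mat_act in *; simpl in *.
  injection A1; injection A2; intros.
  f_equal; apply eq_IZR; lra.
Qed.

Open Scope Z_scope.

Fixpoint ab (t e : Z) (k : nat) : Z * Z :=
  match k with
  | O => (0, 1)
  | S k' => let (al, be) := ab t e k' in (t * al + be, - e * al)
  end.

Lemma mpow_lin p q r s k :
  let t := p + s in let e := p * s - q * r in
  mpow (mkM p q r s) k =
  mkM (fst (ab t e k) * p + snd (ab t e k)) (fst (ab t e k) * q)
      (fst (ab t e k) * r) (fst (ab t e k) * s + snd (ab t e k)).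
Proof.
  intros t e. induction k.
  - reflexivity.
  - simpl mpow. rewrite IHk. simpl ab. destruct (ab t e k) as [al be]. simpl.
    unfold mmul; simpl. unfold t, e. f_equal; ring.
Qed.

Fixpoint Lr (t e : Z) (k : nat) : Z * Z :=
  match k with
  | O => (2, t)
  | S k' => let (x, y) := Lr t e k' in (y, t * y - e * x)
  end.

Lemma Lr_tr t e k :
  fst (Lr t e k) = fst (ab t e k) * t + 2 * snd (ab t e k) /\
  snd (Lr t e k) = fst (ab t e (S k)) * t + 2 * snd (ab t e (S k)).
Proof.
  induction k.
  - cbn [Lr ab fst snd]. split; ring.
  - cbn [Lr]. destruct (Lr t e k) as [x y]. cbn [Lr ab fst snd] in *. destruct IHk as [H1 H2].
    cbn [ab] in *. destruct (ab t e k) as [al be]. cbn [Lr ab fst snd] in *. split. auto.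
    rewrite H2, H1. ring.
Qed.

Fixpoint flip (k : nat) : Z := match k with O => 1 | S k' => - flip k' end.

Lemma Lr_neg t e k : fst (Lr (-t) e k) = flip k * fst (Lr t e k) /\
                     snd (Lr (-t) e k) = flip (S k) * snd (Lr t e k).
Proof.
  induction k.
  - cbn [Lr ab fst snd flip]. split; ring.
  - cbn [Lr]. destruct (Lr t e k) as [x y]. destruct (Lr (-t) e k) as [x' y'].
    cbn [Lr ab fst snd flip] in *. destruct IHk as [H1 H2]. split. auto. rewrite H1, H2. ring.
Qed.

Lemma flip_abs k : flip k = 1 \/ flip k = -1.
Proof. induction k; simpl; lia. Qed.

Lemma Lr_grow t e : (e = -1 /\ 1 <= t) \/ (e = 1 /\ 3 <= t) ->
  forall k, (1 <= k)%nat -> 1 <= fst (Lr t e k) < snd (Lr t e k).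
Proof.
  intros Ht k Hk. induction Hk.
  - simpl. nia.
  - simpl Lr. destruct (Lr t e m) as [x y]. simpl in *. nia.
Qed.

Lemma Lr_big t e : (e = -1 /\ 1 <= t) \/ (e = 1 /\ 3 <= t) ->
  forall k, (2 <= k)%nat -> t < fst (Lr t e k).
Proof.
  intros Ht k Hk. induction Hk.
  - simpl. nia.
  - pose proof (Lr_grow t e Ht m ltac:(lia)). simpl Lr. destruct (Lr t e m) as [x y]. simpl in *. lia.
Qed.

Lemma Lr_big_abs t e : (e = -1 /\ t <> 0) \/ (e = 1 /\ 3 <= Z.abs t) ->
  forall k, (2 <= k)%nat -> Z.abs t < Z.abs (fst (Lr t e k)).
Proof.
  intros Ht k Hk. destruct (Z_le_gt_dec 0 t).
  - pose proof (Lr_big t e ltac:(lia) k Hk). lia.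
  - pose proof (Lr_big (-t) e ltac:(lia) k Hk). destruct (Lr_neg (-t) e k) as [H1 _].
    replace (- - t) with t in H1 by ring. rewrite H1. destruct (flip_abs k) as [-> | ->]; lia.
Qed.

Lemma square_ratio0 X Y D : 0 < Y -> X * X = D * (Y * Y) -> exists k, D = k * k.
Proof.
  intros HY HX.
  set (g := Z.gcd X Y).
  assert (Hg0 : 0 < g).
  { pose proof (Z.gcd_nonneg X Y). assert (g <> 0). { intro E. apply Z.gcd_eq_0 in E. lia. } fold g in H. lia. }
  destruct (Z.gcd_divide_l X Y) as [x Hx]. destruct (Z.gcd_divide_r X Y) as [y Hy]. fold g in Hx, Hy.
  pose proof (Zis_gcd_rel_prime X Y g ltac:(lia) ltac:(lia) (Zgcd_is_gcd X Y)) as Hr.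
  rewrite Hx, Hy, !Z.div_mul in Hr by lia.
  assert (E : x * x = D * (y * y)).
  { apply (Z.mul_cancel_l _ _ (g * g)). nia. rewrite Hx, Hy in HX. nia. }
  assert (Hyd : (y | x * x)) by (exists (D * y); rewrite E; ring).
  assert (Hrp : rel_prime y (x * x)) by (apply rel_prime_mult; apply rel_prime_sym; auto).
  assert (Hy1 : (y | 1)).
  { destruct Hrp as [_ _ H]. apply H; [exists 1; ring | auto]. }
  apply Z.divide_1_r in Hy1. exists x. destruct Hy1 as [-> | ->]; lia.
Qed.

Lemma square_ratio X Y D : Y <> 0 -> X * X = D * (Y * Y) -> exists k, D = k * k.
Proof.
  intros HY HX. destruct (Z_le_gt_dec 0 Y).
  - apply (square_ratio0 X Y D); auto; lia.
  - apply (square_ratio0 X (-Y) D). lia. nia.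
Qed.

Lemma no_rational_eig a b c d u1 u2 : a * d - b * c = 1 -> Z.abs (a + d) > 2 ->
  (u1 <> 0 \/ u2 <> 0) -> u1 * (c * u1 + d * u2) - u2 * (a * u1 + b * u2) <> 0.
Proof.
  intros Hdet Htr Hu E.
  destruct (Z.eq_dec u2 0) as [H2|H2].
  - subst. assert (Hc : c * (u1 * u1) = 0) by (rewrite <- E; ring).
    apply Z.mul_eq_0 in Hc. destruct Hc as [Hc|Hc]; [|apply Z.mul_eq_0 in Hc; lia].
    subst. replace (a * d - b * 0) with (a * d) in Hdet by ring.
    pose proof Hdet as H'. apply Z.mul_eq_1 in H'. destruct H' as [Ha|Ha]; subst a; lia.
  - assert (Hsq : (2*c*u1 + (d - a)*u2) * (2*c*u1 + (d-a)*u2) = ((a+d)*(a+d) - 4) * (u2 * u2)).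
    { assert (Id : (2*c*u1 + (d - a)*u2) * (2*c*u1 + (d-a)*u2) - ((a+d)*(a+d) - 4) * (u2 * u2) =
        4 * c * (u1 * (c * u1 + d * u2) - u2 * (a * u1 + b * u2)) - 4 * (a*d - b*c - 1) * (u2 * u2)) by ring.
      rewrite E, Hdet in Id. lia. }
    destruct (square_ratio _ _ _ H2 Hsq) as [k Hk].
    assert (0 <= k * k) by nia.
    set (T := Z.abs (a + d)) in *. assert (T * T = (a+d)*(a+d)) by (unfold T; destruct (Z.abs_spec (a+d)) as [[_ ->]|[_ ->]]; ring).
    set (K := Z.abs k). assert (K * K = k * k) by (unfold K; destruct (Z.abs_spec k) as [[_ ->]|[_ ->]]; ring).
    assert (0 <= K) by (unfold K; lia).
    assert (T * T - K * K = 4) by lia.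
    assert (K < T) by nia. assert (T - 1 < K) by nia. lia.
Qed.

Definition tr (M : M2) := m11 M + m22 M.
Definition det (M : M2) := m11 M * m22 M - m12 M * m21 M.

Lemma finite_order (a b c d : Z) (B : M2) (n : nat) :
  a * d - b * c = 1 -> Z.abs (a + d) > 2 -> (2 <= n)%nat ->
  (det B = 1 \/ det B = -1) ->
  mmul (mkM a b c d) B = mmul (mpow B n) (mkM a b c d) ->
  exists q, (1 <= q)%nat /\ mpow B q = mid.
Proof.
  intros Hdet Htr Hn HdB HAB.
  destruct B as [p q r s]. unfold det in HdB; simpl in HdB.
  set (t := p + s) in *. set (e := p * s - q * r) in *.
  rewrite (mpow_lin p q r s n) in HAB. fold t e in HAB.
  destruct (ab t e n) as [al be] eqn:Hab. simpl in HAB.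
  unfold mmul in HAB; simpl in HAB. injection HAB; clear HAB; intros E4 E3 E2 E1.
  assert (Htrn : al * t + 2 * be = t).
  { assert (H : (a*d - b*c) * ((al*p + be) + (al*s + be) - (p+s)) =
      ((al*p+be)*a + al*q*c - (a*p + b*r)) * d + ((al*p+be)*b + al*q*d - (a*q + b*s)) * (-c)
      + (al*r*a + (al*s+be)*c - (c*p + d*r)) * (-b) + (al*r*b + (al*s+be)*d - (c*q+d*s)) * a) by ring.
    rewrite Hdet in H. rewrite <- E1, <- E2, <- E3, <- E4 in H. unfold t. lia. }
  assert (Hfin : forall t0 e0, t = t0 -> e = e0 -> ab t0 e0 12 = (0, 1) -> exists q0, (1 <= q0)%nat /\ mpow (mkM p q r s) q0 = mid).
  { intros t0 e0 Ht0 He0 H12. exists 12%nat. split. lia.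
    rewrite (mpow_lin p q r s 12). fold t e. rewrite Ht0, He0, H12. simpl. unfold mid. f_equal; ring. }
  destruct HdB as [He | He].
  -
    destruct (Z_le_gt_dec 3 (Z.abs t)) as [Hbig | Hsmall].
    + exfalso. pose proof (Lr_big_abs t e ltac:(lia) n Hn) as G.
      destruct (Lr_tr t e n) as [G1 _]. rewrite Hab in G1. cbn [fst snd] in G1. lia.
    + destruct (Z.eq_dec (Z.abs t) 2) as [Hpar | Hnp].
      *
        set (eps := t / 2). assert (Heps : t = 2 * eps /\ eps * eps = 1).
        { unfold eps. destruct (Z.abs_spec t) as [[_ H]|[_ H]]; rewrite H in Hpar;
          [replace t with 2 by lia | replace t with (-2) by lia]; split; reflexivity. }
        destruct Heps as [Ht2 Hee].
        assert (Hbe : be = eps - al * eps) by nia.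
        (* A N = al N A for N = B - eps I *)
        assert (F1 : a * (p - eps) + b * r = al * ((p - eps) * a + q * c)) by (subst be; nia).
        assert (F2 : c * (p - eps) + d * r = al * (r * a + (s - eps) * c)) by (subst be; nia).
        assert (F3 : a * q + b * (s - eps) = al * ((p - eps) * b + q * d)) by (subst be; nia).
        assert (F4 : c * q + d * (s - eps) = al * (r * b + (s - eps) * d)) by (subst be; nia).
        assert (HdN : (p - eps) * (s - eps) - q * r = 0) by (unfold e, t in *; nia).
        destruct (Z.eq_dec (p - eps) 0) as [Hp0|Hp0]; [destruct (Z.eq_dec r 0) as [Hr0|Hr0]|].
        -- destruct (Z.eq_dec q 0) as [Hq0|Hq0]; [destruct (Z.eq_dec (s - eps) 0) as [Hs0|Hs0]|].
           ++
              exists 2%nat. split. lia. simpl. unfold mmul, mid; simpl.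
              replace p with eps by lia. replace s with eps by lia. subst q r. f_equal; nia.
           ++ exfalso. apply (no_rational_eig a b c d q (s - eps) Hdet Htr ltac:(lia)).
              rewrite F3, F4. transitivity (- al * b * ((p - eps) * (s - eps) - q * r)); [ring | rewrite HdN; ring].
           ++ exfalso. apply (no_rational_eig a b c d q (s - eps) Hdet Htr ltac:(lia)).
              rewrite F3, F4. transitivity (- al * b * ((p - eps) * (s - eps) - q * r)); [ring | rewrite HdN; ring].
        -- exfalso. apply (no_rational_eig a b c d (p - eps) r Hdet Htr ltac:(lia)).
           rewrite F1, F2. transitivity (al * c * ((p - eps) * (s - eps) - q * r)); [ring | rewrite HdN; ring].
        -- exfalso. apply (no_rational_eig a b c d (p - eps) r Hdet Htr ltac:(lia)).
           rewrite F1, F2. transitivity (al * c * ((p - eps) * (s - eps) - q * r)); [ring | rewrite HdN; ring].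
      * assert (t = -1 \/ t = 0 \/ t = 1) as [Ht|[Ht|Ht]] by lia;
        apply (Hfin t 1); auto; rewrite Ht; reflexivity.
  -
    destruct (Z.eq_dec t 0) as [Ht0 | Htn].
    + apply (Hfin 0 (-1)); auto.
    + exfalso. pose proof (Lr_big_abs t e ltac:(lia) n Hn) as G.
      destruct (Lr_tr t e n) as [G1 _]. rewrite Hab in G1. cbn [fst snd] in G1. lia.
Qed.

Open Scope R_scope.

Definition tcomm (H : R * R -> R * R) : Prop :=
  forall x m, isZ2 m -> H (vadd x m) = vadd (H x) m.

Lemma linpart_mid_tcomm H : linpart H mid -> tcomm H.
Proof. intros L x m Hm. rewrite L by auto. rewrite mact_id. reflexivity. Qed.

Lemma tcomm_iter H k : tcomm H -> tcomm (Nat.iter k H).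
Proof.
  intros T. induction k; intros x m Hm. reflexivity.
  rewrite !Nat.iter_succ, IHk, T by auto. reflexivity.
Qed.

Lemma isZ2_scale_nat k v : isZ2 v -> isZ2 (vscale (INR k) v).
Proof.
  intros [H1 H2]. rewrite INR_IZR_INZ. split; simpl; apply isZ_mul; auto using isZ_IZR.
Qed.
Lemma isZ2_scale_Z z v : isZ2 v -> isZ2 (vscale (IZR z) v).
Proof. intros [H1 H2]. split; simpl; apply isZ_mul; auto using isZ_IZR. Qed.

Lemma iter_ext {X} (g1 g2 : X -> X) k x : (forall y, g1 y = g2 y) -> Nat.iter k g1 x = Nat.iter k g2 x.
Proof. intros E. induction k; simpl; auto. rewrite IHk, E. reflexivity. Qed.

Lemma iter_mul {X} (g : X -> X) k m x : Nat.iter (k * m) g x = Nat.iter k (Nat.iter m g) x.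
Proof.
  induction k. reflexivity. simpl Nat.mul. rewrite Nat.iter_add, IHk. reflexivity.
Qed.

Lemma iter_comm {X} (g : X -> X) k m x : Nat.iter k (Nat.iter m g) x = Nat.iter m (Nat.iter k g) x.
Proof. rewrite <- !iter_mul, Nat.mul_comm. reflexivity. Qed.

Lemma iter_transl_out H v k x : tcomm H -> isZ2 v ->
  Nat.iter k (fun y => vadd (H y) v) x = vadd (Nat.iter k H x) (vscale (INR k) v).
Proof.
  intros T Hv. induction k.
  - simpl. apply vec_eq; simpl; ring.
  - rewrite !Nat.iter_succ, IHk, T by (apply isZ2_scale_nat; auto).
    rewrite S_INR. apply vec_eq; simpl; ring.
Qed.

Lemma conj_iter (P Pi : M2) H k x : (forall y, mact P (mact Pi y) = y) ->
  (forall y, mact Pi (mact P y) = y) ->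
  mact P (Nat.iter k H (mact Pi x)) = Nat.iter k (fun y => mact P (H (mact Pi y))) x.
Proof.
  intros E E'. induction k. simpl. apply E.
  rewrite !Nat.iter_succ, <- IHk, E'. reflexivity.
Qed.

Lemma rational_rot (a b c d : Z) (n : nat) F1 v :
  (a * d - b * c = 1)%Z -> (2 <= n)%nat -> tcomm F1 -> isZ2 v ->
  (forall x, mact (mkM a b c d) (F1 (mact (mkM d (-b) (-c) a) x)) = vadd (Nat.iter n F1 x) v) ->
  exists q w, (1 <= q)%nat /\ isZ2 w /\
    forall x, mact (mkM a b c d) (vadd (Nat.iter q F1 (mact (mkM d (-b) (-c) a) x)) (vscale (-1) w))
              = Nat.iter n (fun y => vadd (Nat.iter q F1 y) (vscale (-1) w)) x.
Proof.
  intros Hdet Hn T [[v1 Hv1] [v2 Hv2]] Hrel.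
  set (nz := Z.of_nat n).
  set (D := ((a - nz) * (d - nz) - b * c)%Z).
  assert (HD : D <> 0%Z).
  { intro E0. assert (E1 : (nz * (a + d - nz) = 1)%Z).
    { transitivity ((a*d - b*c) - D)%Z. unfold D; ring. rewrite E0, Hdet. ring. }
    apply Z.mul_eq_1 in E1. unfold nz in E1. lia. }
  set (sg := Z.sgn D).
  set (q := Z.to_nat (Z.abs D)).
  set (w := (IZR (sg * ((d - nz) * v1 - b * v2)), IZR (sg * (- c * v1 + (a - nz) * v2)))).
  assert (Hw : isZ2 w) by (split; apply isZ_IZR).
  assert (Hq : INR q = IZR (sg * D)).
  { unfold q, sg. rewrite INR_IZR_INZ, Z2Nat.id by lia. f_equal. rewrite Z.mul_comm, Z.sgn_abs. reflexivity. }
  assert (HMw : vadd (mact (mkM a b c d) w) (vscale (- INR n) w) = vscale (INR q) v).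
  { rewrite Hq. replace (INR n) with (IZR nz) by (unfold nz; rewrite INR_IZR_INZ; reflexivity).
    destruct v as [v1' v2']. simpl in Hv1, Hv2. subst v1' v2'.
    unfold mact, mat_act, w, vadd, vscale; simpl. apply vec_eq; simpl;
    rewrite <- ?opp_IZR, <- ?mult_IZR, <- ?plus_IZR; f_equal; unfold D; ring. }
  exists q, w. split; [|split; auto].
  { unfold q. assert (0 < Z.abs D)%Z by lia. lia. }
  intros x.
  assert (Inv : forall y, mact (mkM a b c d) (mact (mkM d (-b) (-c) a) y) = y).
  { intros y. unfold mact, mat_act; simpl. apply vec_eq; simpl;
    rewrite ?opp_IZR; [transitivity (IZR (a*d - b*c) * fst y) | transitivity (IZR (a*d - b*c) * snd y)];
    try (rewrite minus_IZR, !mult_IZR; ring); rewrite Hdet; ring. }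
  assert (Inv' : forall y, mact (mkM d (-b) (-c) a) (mact (mkM a b c d) y) = y).
  { intros y. unfold mact, mat_act; simpl. apply vec_eq; simpl;
    rewrite ?opp_IZR; [transitivity (IZR (a*d - b*c) * fst y) | transitivity (IZR (a*d - b*c) * snd y)];
    try (rewrite minus_IZR, !mult_IZR; ring); rewrite Hdet; ring. }
  assert (Tn : tcomm (Nat.iter n F1)) by (apply tcomm_iter; auto).
  assert (Lin : forall y z, mact (mkM a b c d) (vadd y (vscale (-1) z)) =
      vadd (mact (mkM a b c d) y) (vscale (-1) (mact (mkM a b c d) z))).
  { intros y z. unfold mact, mat_act; apply vec_eq; simpl; ring. }
  rewrite Lin, conj_iter by auto.
  rewrite (iter_ext _ (fun y => vadd (Nat.iter n F1 y) v)) by auto.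
  assert (Hv : isZ2 v) by (split; simpl; [rewrite Hv1|rewrite Hv2]; apply isZ_IZR).
  rewrite iter_transl_out by auto.
  rewrite iter_transl_out.
  2: apply tcomm_iter; auto.
  2: { replace (vscale (-1) w) with (vscale (IZR (-1)) w) by reflexivity. apply isZ2_scale_Z; auto. }
  rewrite iter_comm. rewrite <- HMw. apply vec_eq; simpl; ring.
Qed.

Open Scope R_scope.

Definition mnorm (M : M2) : R :=
  Rabs (IZR (m11 M)) + Rabs (IZR (m12 M)) + Rabs (IZR (m21 M)) + Rabs (IZR (m22 M)).

Lemma mnorm_ge0 M : 0 <= mnorm M.
Proof.
  unfold mnorm. pose proof (Rabs_pos (IZR (m11 M))). pose proof (Rabs_pos (IZR (m12 M))).
  pose proof (Rabs_pos (IZR (m21 M))). pose proof (Rabs_pos (IZR (m22 M))). lra.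
Qed.

Lemma nrm_mact M v : nrm (mact M v) <= mnorm M * nrm v.
Proof. apply nrm_mat. Qed.

Lemma nrm_rep p : nrm (rep p) <= 1.
Proof.
  destruct (rep_range p). apply nrm_le; rewrite Rabs_right; lra.
Qed.

Lemma bound_local F d B : 0 < d ->
  (forall x y, nrm (vsub y x) < d -> nrm (vsub (F y) (F x)) <= 1/2) -> linpart F B ->
  exists C, forall x, nrm (vsub (F x) (mact B x)) <= C.
Proof.
  intros Hd Hl L.
  set (K := S (Z.to_nat (up (1 / d)))).
  assert (HK : 0 < INR K) by (apply lt_0_INR; unfold K; lia).
  assert (HKd : 1 / INR K < d).
  { pose proof (archimed (1/d)) as [H1 _].
    assert (0 < 1/d) by (apply Rdiv_lt_0_compat; lra).
    assert (IZR (up (1/d)) < INR K).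
    { unfold K. rewrite S_INR, INR_IZR_INZ, Z2Nat.id. lra. apply le_IZR; lra. }
    apply Rmult_lt_reg_r with (INR K / d). apply Rdiv_lt_0_compat; lra.
    replace (1 / INR K * (INR K / d)) with (1/d) by (field; lra).
    replace (d * (INR K / d)) with (INR K) by (field; lra). lra. }
  assert (Hch : forall r, nrm r <= 1 -> forall j, (j <= K)%nat ->
            nrm (vsub (F (vscale (INR j / INR K) r)) (F (0,0))) <= INR j / 2).
  { intros r Hr j. induction j; intros Hj.
    - simpl. unfold Rdiv. rewrite Rmult_0_l.
      replace (vscale 0 r) with (0,0) by (apply vec_eq; simpl; ring).
      replace (vsub (F (0,0)) (F (0,0))) with (vscale 0 (0,0)) by (apply vec_eq; simpl; ring).
      rewrite nrm_scale, Rabs_R0. lra.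
    - replace (vsub (F (vscale (INR (S j) / INR K) r)) (F (0,0))) with
        (vadd (vsub (F (vscale (INR (S j) / INR K) r)) (F (vscale (INR j / INR K) r)))
              (vsub (F (vscale (INR j / INR K) r)) (F (0,0)))) by (apply vec_eq; simpl; ring).
      eapply Rle_trans. apply nrm_tri. rewrite S_INR.
      assert (nrm (vsub (F (vscale (INR (S j) / INR K) r)) (F (vscale (INR j / INR K) r))) <= 1/2).
      { apply Hl. rewrite vsub_scale, nrm_scale.
        replace (INR (S j) / INR K - INR j / INR K) with (1 / INR K) by (rewrite S_INR; field; lra).
        rewrite Rabs_right by (apply Rle_ge, Rlt_le, Rdiv_lt_0_compat; lra).
        pose proof (nrm_ge0 r).
        apply Rle_lt_trans with (1 / INR K * 1). apply Rmult_le_compat_l; auto.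
        left; apply Rdiv_lt_0_compat; lra. lra. }
      pose proof (IHj (Nat.lt_le_incl _ _ Hj)). rewrite S_INR in H. lra. }
  exists (INR K / 2 + nrm (F (0,0)) + mnorm B).
  intros x. set (r := rep (proj x)).
  assert (Hm : isZ2 (vsub x r)) by apply isZ2_rep_proj.
  replace x with (vadd r (vsub x r)) at 1 2 by (apply vec_eq; simpl; ring).
  rewrite L by auto. rewrite mact_add.
  replace (vsub (vadd (F r) (mact B (vsub x r))) (vadd (mact B r) (mact B (vsub x r)))) with
    (vadd (vsub (F r) (F (0,0))) (vadd (F (0,0)) (vscale (-1) (mact B r)))) by (apply vec_eq; simpl; ring).
  eapply Rle_trans. apply nrm_tri. eapply Rle_trans. apply Rplus_le_compat_l. apply nrm_tri.
  rewrite nrm_scale. replace (Rabs (-1)) with 1 by (unfold Rabs; destruct Rcase_abs; lra).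
  pose proof (Hch r (nrm_rep _) K (le_n K)) as H1.
  rewrite Rdiv_diag in H1 by lra. replace (vscale 1 r) with r in H1 by (apply vec_eq; simpl; ring).
  pose proof (nrm_mact B r). assert (Hr1 : nrm r <= 1) by apply nrm_rep.
  pose proof (mnorm_ge0 B).
  assert (mnorm B * nrm r <= mnorm B) by (rewrite <- (Rmult_1_r (mnorm B)) at 2; apply Rmult_le_compat_l; auto).
  lra.
Qed.

Lemma bound_comp H1 H2 M1 M2' C1 C2 :
  (forall x, nrm (vsub (H1 x) (mact M1 x)) <= C1) ->
  (forall x, nrm (vsub (H2 x) (mact M2' x)) <= C2) ->
  forall x, nrm (vsub (H1 (H2 x)) (mact (mmul M1 M2') x)) <= C1 + mnorm M1 * C2.
Proof.
  intros B1 B2 x. rewrite mact_mul.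
  replace (vsub (H1 (H2 x)) (mact M1 (mact M2' x))) with
    (vadd (vsub (H1 (H2 x)) (mact M1 (H2 x))) (mact M1 (vsub (H2 x) (mact M2' x))))
    by (unfold mact, mat_act; apply vec_eq; simpl; ring).
  eapply Rle_trans. apply nrm_tri. apply Rplus_le_compat. auto.
  eapply Rle_trans. apply nrm_mact. apply Rmult_le_compat_l. apply mnorm_ge0. auto.
Qed.

Lemma bound_iter H M C : (forall x, nrm (vsub (H x) (mact M x)) <= C) ->
  forall k, exists Ck, forall x, nrm (vsub (Nat.iter k H x) (mact (mpow M k) x)) <= Ck.
Proof.
  intros B k. induction k.
  - exists 0. intros x. simpl. rewrite mact_id.
    replace (vsub x x) with (vscale 0 x) by (apply vec_eq; simpl; ring). rewrite nrm_scale, Rabs_R0. lra.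
  - destruct IHk as [Ck Hk]. exists (C + mnorm M * Ck). intros x.
    rewrite Nat.iter_succ. simpl mpow. apply (bound_comp H (Nat.iter k H) M (mpow M k)); auto.
Qed.

Lemma mpow_mid k : mpow mid k = mid.
Proof. induction k; simpl; auto. rewrite IHk. reflexivity. Qed.

Lemma mmul_assoc M N P : mmul M (mmul N P) = mmul (mmul M N) P.
Proof. destruct M, N, P; unfold mmul; cbn -[Z.mul Z.add]; f_equal; ring. Qed.
Lemma mmul_id_l M : mmul mid M = M.
Proof. destruct M; unfold mmul, mid; cbn -[Z.mul Z.add]; f_equal; ring. Qed.

Lemma mpow_add M a b : mpow M (a + b) = mmul (mpow M a) (mpow M b).
Proof.
  induction a. cbn [Nat.add mpow]. rewrite mmul_id_l. reflexivity.
  cbn [Nat.add mpow]. rewrite IHa, mmul_assoc. reflexivity.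
Qed.

Lemma mpow_mul M k m : mpow M (k * m) = mpow (mpow M m) k.
Proof.
  induction k. reflexivity. cbn [Nat.mul mpow]. rewrite mpow_add, IHk. reflexivity.
Qed.

Open Scope R_scope.

Lemma abs_le_bt x e : Rabs x <= e -> - e <= x <= e.
Proof. intros H. pose proof (Rle_abs x). pose proof (Rle_abs (-x)). rewrite Rabs_Ropp in H1. lra. Qed.

Lemma cont_affine p k : continuity (fun s => p + s * k).
Proof.
  intros s. unfold continuity_pt, continue_in, limit1_in, limit_in, D_x, no_cond.
  simpl. unfold R_dist. intros eps Heps. exists (eps / (Rabs k + 1)).
  pose proof (Rabs_pos k). split. apply Rdiv_lt_0_compat; lra.
  intros y [_ Hy].
  replace (p + y * k - (p + s * k)) with ((y - s) * k) by ring. rewrite Rabs_mult.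
  apply Rle_lt_trans with (Rabs (y - s) * (Rabs k + 1)). apply Rmult_le_compat_l; auto using Rabs_pos; lra.
  apply Rmult_lt_reg_r with (/ (Rabs k + 1)). apply Rinv_0_lt_compat; lra.
  rewrite Rmult_assoc, Rinv_r, Rmult_1_r by lra. apply Hy.
Qed.

Lemma cont_comp_affine psi p k : continuity psi -> continuity (fun s => psi (p + s * k)).
Proof. intros H. exact (continuity_comp (fun s => p + s * k) psi (cont_affine p k) H). Qed.

Lemma cont_inj_mono (psi : R -> R) : continuity psi -> (forall x y, psi x = psi y -> x = y) ->
  (forall x y, x < y -> psi x < psi y) \/ (forall x y, x < y -> psi y < psi x).
Proof.
  intros Hc Hi. destruct (classic (forall x y, x < y -> psi x < psi y)) as [H|Hn]; [left; auto|right].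
  apply not_all_ex_not in Hn. destruct Hn as [x' Hn]. apply not_all_ex_not in Hn. destruct Hn as [y' Hn].
  apply imply_to_and in Hn. destruct Hn as [Hxy' Hn].
  assert (Hd' : psi y' < psi x').
  { destruct (Rtotal_order (psi x') (psi y')) as [|[E|]]; try lra. apply Hi in E. lra. }
  intros x y Hxy. destruct (Rtotal_order (psi x) (psi y)) as [Hlt|[E|Hgt]]; auto.
  2: { apply Hi in E. lra. }
  exfalso.
  destruct (IVT (fun s => psi (x + s * (x' - x)) - psi (y + s * (y' - y))) 0 1) as [s [Hs Hs0]].
  - apply continuity_minus; apply cont_comp_affine; auto.
  - lra.
  - replace (x + 0 * (x' - x)) with x by ring. replace (y + 0 * (y' - y)) with y by ring. lra.
  - replace (x + 1 * (x' - x)) with x' by ring. replace (y + 1 * (y' - y)) with y' by ring. lra.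
  - assert (E : psi (x + s * (x' - x)) = psi (y + s * (y' - y))) by lra.
    apply Hi in E.
    assert (E2 : (1 - s) * (y - x) + s * (y' - x') = 0) by lra.
    assert (0 <= s * (y' - x')) by (apply Rmult_le_pos; lra).
    destruct (Rlt_le_dec s 1).
    + assert (0 < (1 - s) * (y - x)) by (apply Rmult_lt_0_compat; lra). lra.
    + assert (s = 1) by lra. subst s. lra.
Qed.

Lemma psi2_fixed (psi : R -> R) : continuity psi -> (forall x y, psi x = psi y -> x = y) ->
  (forall eps, 0 < eps -> exists N, (1 <= N)%nat /\ forall t, Rabs (Nat.iter N psi t - t) <= eps) ->
  forall t, psi (psi t) = t.
Proof.
  intros Hc Hi Hsmall t.
  set (chi := fun s => psi (psi s)).
  assert (Hmono : forall x y, x < y -> chi x < chi y).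
  { destruct (cont_inj_mono psi Hc Hi) as [H|H]; intros x y Hxy; unfold chi; auto. }
  assert (Hmono' : forall x y, x <= y -> chi x <= chi y).
  { intros x y [H|H]. left; auto. subst; lra. }
  assert (Hit : forall N s, Nat.iter N chi s = Nat.iter N psi (Nat.iter N psi s)).
  { intros N s. rewrite <- Nat.iter_add. replace (N + N)%nat with (N * 2)%nat by lia.
    rewrite iter_mul. reflexivity. }
  assert (Hclose : forall eps, 0 < eps -> exists N, (1 <= N)%nat /\ forall s, Rabs (Nat.iter N chi s - s) <= 2 * eps).
  { intros eps Heps. destruct (Hsmall eps Heps) as [N [HN1 HN]]. exists N. split; auto. intros s. rewrite Hit.
    replace (Nat.iter N psi (Nat.iter N psi s) - s) with
      ((Nat.iter N psi (Nat.iter N psi s) - Nat.iter N psi s) + (Nat.iter N psi s - s)) by ring.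
    eapply Rle_trans. apply Rabs_triang. pose proof (HN s). pose proof (HN (Nat.iter N psi s)). lra. }
  destruct (Rtotal_order (chi t) t) as [Hlt|[E|Hgt]]; auto.
  - exfalso.
    assert (Hdec : forall m, Nat.iter (S m) chi t <= Nat.iter m chi t).
    { induction m. simpl. lra. rewrite (Nat.iter_succ (S m)), (Nat.iter_succ m). apply Hmono'. auto. }
    assert (Hle2 : forall m, Nat.iter (S m) chi t <= chi t).
    { induction m. simpl; lra. pose proof (Hdec (S m)). lra. }
    destruct (Hclose ((t - chi t) / 4) ltac:(lra)) as [N [HN1 HN]].
    specialize (HN t). destruct N as [|N]. lia.
    pose proof (Hle2 N). apply abs_le_bt in HN. lra.
  - exfalso.
    assert (Hdec : forall m, Nat.iter m chi t <= Nat.iter (S m) chi t).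
    { induction m. simpl. lra. rewrite (Nat.iter_succ (S m)), (Nat.iter_succ m). apply Hmono'. auto. }
    assert (Hle2 : forall m, chi t <= Nat.iter (S m) chi t).
    { induction m. simpl; lra. pose proof (Hdec (S m)). lra. }
    destruct (Hclose ((chi t - t) / 4) ltac:(lra)) as [N [HN1 HN]].
    specialize (HN t). destruct N as [|N]. lia.
    pose proof (Hle2 N). apply abs_le_bt in HN. lra.
Qed.

Open Scope R_scope.

Lemma inv_AAi a b c d y : (a * d - b * c = 1)%Z ->
  mact (mkM a b c d) (mact (mkM d (-b) (-c) a) y) = y.
Proof.
  intros Hdet. unfold mact, mat_act; simpl. apply vec_eq; simpl;
  rewrite ?opp_IZR; [transitivity (IZR (a*d - b*c) * fst y) | transitivity (IZR (a*d - b*c) * snd y)];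
  try (rewrite minus_IZR, !mult_IZR; ring); rewrite Hdet; ring.
Qed.

Lemma inv_AiA a b c d y : (a * d - b * c = 1)%Z ->
  mact (mkM d (-b) (-c) a) (mact (mkM a b c d) y) = y.
Proof.
  intros Hdet. unfold mact, mat_act; simpl. apply vec_eq; simpl;
  rewrite ?opp_IZR; [transitivity (IZR (a*d - b*c) * fst y) | transitivity (IZR (a*d - b*c) * snd y)];
  try (rewrite minus_IZR, !mult_IZR; ring); rewrite Hdet; ring.
Qed.

Lemma vanish lam r K z : 0 < r -> r < lam -> 0 <= z ->
  (forall k, lam ^ k * z <= r ^ k * K) -> z = 0.
Proof.
  intros Hr Hl Hz H. destruct Hz as [Hz|]; auto. exfalso.
  assert (Hq : Rabs (lam / r) > 1).
  { rewrite Rabs_right. apply Rmult_lt_reg_r with r; auto. unfold Rdiv.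
    rewrite Rmult_assoc, Rinv_l, Rmult_1_r, Rmult_1_l by lra. auto.
    apply Rle_ge, Rlt_le, Rdiv_lt_0_compat; lra. }
  destruct (Pow_x_infinity (lam / r) Hq (K / z + 1)) as [N HN].
  specialize (HN N (le_n N)). specialize (H N).
  assert (Hp : 0 < (lam / r) ^ N) by (apply pow_lt, Rdiv_lt_0_compat; lra).
  rewrite Rabs_right in HN by lra.
  unfold Rdiv in HN. rewrite Rpow_mult_distr, pow_inv in HN.
  assert (0 < r ^ N) by (apply pow_lt; auto).
  assert (lam ^ N * / r ^ N * z <= K).
  { apply Rmult_le_reg_l with (r ^ N); auto.
    replace (r ^ N * (lam ^ N * / r ^ N * z)) with (lam ^ N * z) by (field; lra). lra. }
  assert ((K * / z + 1) * z <= K).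
  { eapply Rle_trans. 2: apply H1. apply Rmult_le_compat_r; lra. }
  replace ((K * / z + 1) * z) with (K + z) in H2 by (field; lra). lra.
Qed.

Lemma dyn_core (a b c d : Z) (lam : R) (n : nat) (G : R * R -> R * R) (C : R) :
  (a * d - b * c = 1)%Z -> (Z.abs (a + d) > 2)%Z -> (2 <= n)%nat ->
  lam * lam - IZR (a + d) * lam + 1 = 0 -> lam > INR n ->
  rcont G -> (forall x y, G x = G y -> x = y) ->
  (forall x, nrm (vsub (G x) x) <= C) ->
  (forall x, mact (mkM a b c d) (G (mact (mkM d (-b) (-c) a) x)) = Nat.iter n G x) ->
  forall x, G (G x) = x.
Proof.
  intros Hdet Htr Hn Heig Hlam Hcont Hinj Hbd Hrel.
  set (A := mkM a b c d) in *. set (Ai := mkM d (-b) (-c) a) in *.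
  assert (HAAi : forall y, mact A (mact Ai y) = y) by (intros; apply inv_AAi; auto).
  assert (HAiA : forall y, mact Ai (mact A y) = y) by (intros; apply inv_AiA; auto).
  assert (Hc : IZR c <> 0).
  { intro E. apply eq_IZR_R0 in E. subst c. replace (a * d - b * 0)%Z with (a * d)%Z in Hdet by ring.
    pose proof Hdet as H'. apply Z.mul_eq_1 in H'. destruct H' as [Ha|Ha]; subst a; lia. }
  assert (Hdet' : IZR a * IZR d - IZR b * IZR c = 1).
  { rewrite <- !mult_IZR, <- minus_IZR, Hdet. reflexivity. }
  rewrite plus_IZR in Heig.
  assert (HnR : 2 <= INR n) by (replace 2 with (INR 2) by (simpl; ring); apply le_INR; auto).
  set (mu := IZR a + IZR d - lam).
  assert (Hmu : mu * lam = 1) by (unfold mu; nra).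
  assert (Hmu0 : 0 < mu) by (apply Rmult_lt_reg_r with lam; lra).
  assert (Hmu1 : mu < 1) by (apply Rmult_lt_reg_r with lam; lra).
  assert (Hmueig : mu * mu - (IZR a + IZR d) * mu + 1 = 0) by (unfold mu; nra).
  set (Uf := fun x : R * R => IZR c * fst x + (lam - IZR a) * snd x).
  set (Sf := fun x : R * R => IZR c * fst x + (mu - IZR a) * snd x).
  assert (UA : forall x, Uf (mact A x) = lam * Uf x).
  { intros x. unfold Uf, A, mact, mat_act; simpl.
    transitivity (lam * (IZR c * fst x + (lam - IZR a) * snd x)
       - snd x * (lam * lam - (IZR a + IZR d) * lam + 1) - snd x * (IZR a * IZR d - IZR b * IZR c - 1)).
    ring. rewrite Heig, Hdet'. ring. }
  assert (SA : forall x, Sf (mact A x) = mu * Sf x).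
  { intros x. unfold Sf, A, mact, mat_act; simpl.
    transitivity (mu * (IZR c * fst x + (mu - IZR a) * snd x)
       - snd x * (mu * mu - (IZR a + IZR d) * mu + 1) - snd x * (IZR a * IZR d - IZR b * IZR c - 1)).
    ring. rewrite Hmueig, Hdet'. ring. }
  assert (Ulin : forall x y, Uf (vsub x y) = Uf x - Uf y) by (intros; unfold Uf, vsub; simpl; ring).
  assert (Slin : forall x y, Sf (vsub x y) = Sf x - Sf y) by (intros; unfold Sf, vsub; simpl; ring).
  set (KU := Rabs (IZR c) + Rabs (lam - IZR a)).
  set (KS := Rabs (IZR c) + Rabs (mu - IZR a)).
  assert (KU0 : 0 <= KU) by (unfold KU; pose proof (Rabs_pos (IZR c)); pose proof (Rabs_pos (lam - IZR a)); lra).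
  assert (KS0 : 0 <= KS) by (unfold KS; pose proof (Rabs_pos (IZR c)); pose proof (Rabs_pos (mu - IZR a)); lra).
  assert (Ubd : forall z, Rabs (Uf z) <= KU * nrm z).
  { intros z. unfold Uf, KU. eapply Rle_trans. apply Rabs_triang. rewrite !Rabs_mult.
    pose proof (nrm_fst z). pose proof (nrm_snd z).
    pose proof (Rabs_pos (IZR c)). pose proof (Rabs_pos (lam - IZR a)).
    assert (Rabs (IZR c) * Rabs (fst z) <= Rabs (IZR c) * nrm z) by (apply Rmult_le_compat_l; auto).
    assert (Rabs (lam - IZR a) * Rabs (snd z) <= Rabs (lam - IZR a) * nrm z) by (apply Rmult_le_compat_l; auto).
    lra. }
  assert (Sbd : forall z, Rabs (Sf z) <= KS * nrm z).
  { intros z. unfold Sf, KS. eapply Rle_trans. apply Rabs_triang. rewrite !Rabs_mult.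
    pose proof (nrm_fst z). pose proof (nrm_snd z).
    pose proof (Rabs_pos (IZR c)). pose proof (Rabs_pos (mu - IZR a)).
    assert (Rabs (IZR c) * Rabs (fst z) <= Rabs (IZR c) * nrm z) by (apply Rmult_le_compat_l; auto).
    assert (Rabs (mu - IZR a) * Rabs (snd z) <= Rabs (mu - IZR a) * nrm z) by (apply Rmult_le_compat_l; auto).
    lra. }
  assert (US_inj : forall x y, Uf x = Uf y -> Sf x = Sf y -> x = y).
  { intros x y E1 E2. unfold Uf, Sf in E1, E2.
    assert (E3 : (lam - mu) * (snd x - snd y) = 0) by lra.
    apply Rmult_integral in E3. destruct E3 as [E3|E3]. lra.
    assert (E4 : IZR c * (fst x - fst y) = 0) by nra.
    apply Rmult_integral in E4. destruct E4 as [E4|E4]. contradiction.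
    apply vec_eq; lra. }
  assert (R1 : forall y, Nat.iter n G (mact A y) = mact A (G y)).
  { intros y. rewrite <- Hrel, HAiA. reflexivity. }
  assert (R2 : forall m z, Nat.iter m (Nat.iter n G) (mact A z) = mact A (Nat.iter m G z)).
  { induction m; intros z. reflexivity. rewrite !Nat.iter_succ, IHm, R1. reflexivity. }
  set (Ak := fun k y => Nat.iter k (mact A) y).
  set (Aik := fun k y => Nat.iter k (mact Ai) y).
  assert (R3 : forall k y, Nat.iter (n ^ k) G (Ak k y) = Ak k (G y)).
  { induction k; intros y. reflexivity.
    assert (E1 : Ak (Datatypes.S k) y = mact A (Ak k y)) by reflexivity.
    assert (E2 : (n ^ Datatypes.S k = n * n ^ k)%nat) by reflexivity.
    rewrite E1, E2.
    rewrite iter_mul, iter_comm, R2, IHk. reflexivity. }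
  assert (UAk : forall k y, Uf (Ak k y) = lam ^ k * Uf y).
  { induction k; intros y. simpl; ring. unfold Ak in *. rewrite Nat.iter_succ, UA, IHk. simpl; ring. }
  assert (SAk : forall k y, Sf (Ak k y) = mu ^ k * Sf y).
  { induction k; intros y. simpl; ring. unfold Ak in *. rewrite Nat.iter_succ, SA, IHk. simpl; ring. }
  assert (AkAik : forall k x, Ak k (Aik k x) = x).
  { induction k; intros x. reflexivity. unfold Ak, Aik in *.
    rewrite Nat.iter_succ_r, Nat.iter_succ, HAAi. apply IHk. }
  assert (Tele : forall m z, Rabs (Uf (Nat.iter m G z) - Uf z) <= INR m * (KU * C)).
  { induction m; intros z. simpl. rewrite Rminus_diag, Rabs_R0. lra.
    rewrite Nat.iter_succ, S_INR.
    replace (Uf (G (Nat.iter m G z)) - Uf z) with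
      (Uf (vsub (G (Nat.iter m G z)) (Nat.iter m G z)) + (Uf (Nat.iter m G z) - Uf z)) by (rewrite Ulin; ring).
    eapply Rle_trans. apply Rabs_triang. pose proof (IHm z).
    pose proof (Ubd (vsub (G (Nat.iter m G z)) (Nat.iter m G z))).
    pose proof (Hbd (Nat.iter m G z)).
    assert (KU * nrm (vsub (G (Nat.iter m G z)) (Nat.iter m G z)) <= KU * C) by (apply Rmult_le_compat_l; auto).
    lra. }
  assert (UG : forall y, Uf (G y) = Uf y).
  { intros y.
    assert (Hv : Rabs (Uf (G y) - Uf y) = 0).
    { apply (vanish lam (INR n) (KU * C)); try lra. apply Rabs_pos.
      intros k. rewrite <- Rabs_right with (lam ^ k) by (apply Rle_ge, pow_le; lra).
      rewrite <- Rabs_mult.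
      replace (lam ^ k * (Uf (G y) - Uf y)) with (Uf (Nat.iter (n ^ k) G (Ak k y)) - Uf (Ak k y))
        by (rewrite R3, !UAk; ring).
      rewrite <- pow_INR. apply Tele. }
    destruct (Req_dec (Uf (G y) - Uf y) 0) as [Hz|Hz]; [lra|]. apply Rabs_no_R0 in Hz. contradiction. }
  assert (UGm : forall m y, Uf (Nat.iter m G y) = Uf y).
  { induction m; intros y. reflexivity. rewrite Nat.iter_succ, UG. apply IHm. }
  assert (Sclose : forall k x, Rabs (Sf (Nat.iter (n ^ k) G x) - Sf x) <= mu ^ k * (KS * C)).
  { intros k x. rewrite <- (AkAik k x). rewrite R3.
    replace (Sf (Ak k (G (Aik k x))) - Sf (Ak k (Aik k x))) with (mu ^ k * Sf (vsub (G (Aik k x)) (Aik k x)))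
      by (rewrite !SAk, Slin; ring).
    rewrite Rabs_mult, Rabs_right by (apply Rle_ge, pow_le; lra).
    apply Rmult_le_compat_l. apply pow_le; lra.
    eapply Rle_trans. apply Sbd. apply Rmult_le_compat_l; auto. }
  assert (Small : forall eps, 0 < eps -> exists N, (1 <= N)%nat /\ forall x, Rabs (Sf (Nat.iter N G x) - Sf x) <= eps).
  { intros eps Heps.
    assert (Hl1 : Rabs lam > 1) by (rewrite Rabs_right; lra).
    destruct (Pow_x_infinity lam Hl1 (KS * C / eps)) as [k Hk]. specialize (Hk k (le_n k)).
    exists (n ^ k)%nat. split. pose proof (Nat.pow_nonzero n k). lia.
    intros x. eapply Rle_trans. apply Sclose.
    assert (Hlk : 0 < lam ^ k) by (apply pow_lt; lra).
    rewrite Rabs_right in Hk by lra.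
    assert (Hmk : mu ^ k * lam ^ k = 1) by (rewrite <- Rpow_mult_distr, Hmu; apply pow1).
    assert (0 <= KS * C).
    { apply Rmult_le_pos; auto. eapply Rle_trans. apply nrm_ge0. apply (Hbd (0,0)). }
    apply Rmult_le_reg_r with (lam ^ k); auto.
    assert (Eq : mu ^ k * (KS * C) * lam ^ k = KS * C)
      by (transitivity (KS * C * (mu ^ k * lam ^ k)); [ring | rewrite Hmk; ring]).
    rewrite Eq.
    apply Rmult_le_reg_r with (/ eps). apply Rinv_0_lt_compat; auto.
    replace (eps * lam ^ k * / eps) with (lam ^ k) by (field; lra). unfold Rdiv in Hk. lra. }
  intros x0.
  set (u0 := Uf x0).
  set (al := (lam - IZR a) / (IZR c * (lam - mu))).
  set (be := - / (lam - mu)).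
  set (p2 := u0 / (lam - mu)).
  set (p1 := (u0 - (lam - IZR a) * p2) / IZR c).
  set (Y := fun t : R => (p1 + al * t, p2 + be * t)).
  assert (HlmD : lam - mu <> 0) by lra.
  assert (UY : forall t, Uf (Y t) = u0).
  { intros t. unfold Uf, Y, p1, p2, al, be; simpl. field. auto. }
  assert (SY : forall t, Sf (Y t) = t).
  { intros t. unfold Sf, Y, p1, p2, al, be, u0, Uf; simpl. field. auto. }
  set (psi := fun t => Sf (G (Y t))).
  assert (Piter : forall m t, Nat.iter m psi t = Sf (Nat.iter m G (Y t))).
  { induction m; intros t. simpl. symmetry; apply SY.
    rewrite !Nat.iter_succ, IHm. unfold psi. f_equal. f_equal.
    apply US_inj. rewrite UY, UGm, UY. reflexivity. rewrite SY. reflexivity. }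
  assert (Pcont : continuity psi).
  { intros t. unfold continuity_pt, continue_in, limit1_in, limit_in, D_x, no_cond.
    simpl. unfold R_dist. intros eps Heps.
    destruct (Hcont (Y t) (eps / (KS + 1))) as [dG [HdG HG]]. apply Rdiv_lt_0_compat; lra.
    set (LY := Rabs al + Rabs be + 1).
    assert (LY0 : 0 < LY) by (unfold LY; pose proof (Rabs_pos al); pose proof (Rabs_pos be); lra).
    exists (dG / LY). split. apply Rdiv_lt_0_compat; lra.
    intros s [_ Hs]. unfold psi. rewrite <- Slin.
    eapply Rle_lt_trans. apply Sbd.
    assert (Hy : nrm (vsub (Y s) (Y t)) < dG).
    { unfold Y, vsub; simpl. apply nrm_lt; simpl.
      - replace (p1 + al * s - (p1 + al * t)) with (al * (s - t)) by ring. rewrite Rabs_mult.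
        apply Rle_lt_trans with (LY * Rabs (s - t)).
        apply Rmult_le_compat_r. apply Rabs_pos. unfold LY; pose proof (Rabs_pos be); lra.
        apply Rmult_lt_reg_r with (/ LY). apply Rinv_0_lt_compat; lra.
        replace (LY * Rabs (s - t) * / LY) with (Rabs (s - t)) by (field; lra). apply Hs.
      - replace (p2 + be * s - (p2 + be * t)) with (be * (s - t)) by ring. rewrite Rabs_mult.
        apply Rle_lt_trans with (LY * Rabs (s - t)).
        apply Rmult_le_compat_r. apply Rabs_pos. unfold LY; pose proof (Rabs_pos al); lra.
        apply Rmult_lt_reg_r with (/ LY). apply Rinv_0_lt_compat; lra.
        replace (LY * Rabs (s - t) * / LY) with (Rabs (s - t)) by (field; lra). apply Hs. }
    pose proof (HG (Y s) Hy).
    apply Rle_lt_trans with ((KS + 1) * nrm (vsub (G (Y s)) (G (Y t)))).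
    apply Rmult_le_compat_r. apply nrm_ge0. lra.
    apply Rmult_lt_reg_r with (/ (KS + 1)). apply Rinv_0_lt_compat; lra.
    replace ((KS + 1) * nrm (vsub (G (Y s)) (G (Y t))) * / (KS + 1)) with (nrm (vsub (G (Y s)) (G (Y t))))
      by (field; lra). unfold Rdiv in H. lra. }
  assert (Pinj : forall s t, psi s = psi t -> s = t).
  { intros s t E. unfold psi in E.
    assert (E2 : G (Y s) = G (Y t)) by (apply US_inj; auto; rewrite !UG, !UY; reflexivity).
    apply Hinj in E2. rewrite <- (SY s), <- (SY t), E2. reflexivity. }
  assert (Psmall : forall eps, 0 < eps -> exists N, (1 <= N)%nat /\ forall t, Rabs (Nat.iter N psi t - t) <= eps).
  { intros eps Heps. destruct (Small eps Heps) as [N [HN1 HN]]. exists N. split; auto.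
    intros t. rewrite Piter. rewrite <- (SY t) at 2. apply HN. }
  pose proof (psi2_fixed psi Pcont Pinj Psmall (Sf x0)) as Hfix.
  assert (HY0 : Y (Sf x0) = x0) by (apply US_inj; [rewrite UY; reflexivity | apply SY]).
  change (psi (psi (Sf x0))) with (Nat.iter 2 psi (Sf x0)) in Hfix.
  rewrite Piter, HY0 in Hfix. simpl in Hfix.
  apply US_inj. rewrite UG, UG. reflexivity. auto.
Qed.

Open Scope R_scope.

Lemma eig_char a b c d lam : (a * d - b * c = 1)%Z -> is_eigenvalue a b c d lam ->
  lam * lam - IZR (a + d) * lam + 1 = 0.
Proof.
  intros Hdet [[v1 v2] [Hv E]]. unfold mat_act in E; simpl in E. injection E as E1 E2.
  assert (Hd : IZR a * IZR d - IZR b * IZR c = 1) by (rewrite <- !mult_IZR, <- minus_IZR, Hdet; reflexivity).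
  rewrite plus_IZR.
  set (P := lam * lam - (IZR a + IZR d) * lam + 1).
  assert (H1 : P * v1 = 0).
  { transitivity ((lam - IZR d) * ((lam - IZR a) * v1 - IZR b * v2) + IZR b * ((lam - IZR d) * v2 - IZR c * v1)
       + (1 - (IZR a * IZR d - IZR b * IZR c)) * v1). unfold P; ring.
    rewrite Hd. replace ((lam - IZR a) * v1 - IZR b * v2) with 0 by lra.
    replace ((lam - IZR d) * v2 - IZR c * v1) with 0 by lra. ring. }
  assert (H2 : P * v2 = 0).
  { transitivity ((lam - IZR a) * ((lam - IZR d) * v2 - IZR c * v1) + IZR c * ((lam - IZR a) * v1 - IZR b * v2)
       + (1 - (IZR a * IZR d - IZR b * IZR c)) * v2). unfold P; ring.
    rewrite Hd. replace ((lam - IZR a) * v1 - IZR b * v2) with 0 by lra.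
    replace ((lam - IZR d) * v2 - IZR c * v1) with 0 by lra. ring. }
  destruct (Req_dec P 0) as [|HP]; auto. exfalso. apply Hv.
  apply Rmult_integral in H1. apply Rmult_integral in H2.
  destruct H1 as [|H1]; [contradiction|]. destruct H2 as [|H2]; [contradiction|]. subst; reflexivity.
Qed.

Lemma eval_app {X} (h hi f fi : X -> X) u v x :
  eval_word h hi f fi (u ++ v) x = eval_word h hi f fi u (eval_word h hi f fi v x).
Proof. induction u as [|l u IH]; simpl; auto. rewrite IH. reflexivity. Qed.

Lemma eval_repeat_Lb {X} (h hi f fi : X -> X) k x :
  eval_word h hi f fi (repeat Lb k) x = Nat.iter k f x.
Proof. induction k; simpl; auto. rewrite IHk. reflexivity. Qed.

Definition evR (n : nat) : word -> R -> R :=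
  eval_word (fun x => INR n * x) (fun x => x / INR n) (fun x => x + 1) (fun x => x - 1).

Lemma iter_plus1 k x : Nat.iter k (fun y => y + 1) x = x + INR k.
Proof. induction k; simpl Nat.iter. simpl; ring. rewrite IHk, S_INR. ring. Qed.

Lemma bs_inv n w1 w2 : (1 <= n)%nat -> bs_eq n w1 w2 -> forall x, evR n w1 x = evR n w2 x.
Proof.
  intros Hn H. assert (Hn0 : INR n <> 0) by (apply not_0_INR; lia).
  induction H; intros x.
  - unfold evR. rewrite !eval_app. f_equal.
    destruct H as [[-> ->]|[[-> ->]|[[-> ->]|[[-> ->]|[-> ->]]]]]; simpl.
    + field; auto.
    + field; auto.
    + ring.
    + ring.
    + rewrite eval_repeat_Lb, iter_plus1. field; auto.
  - reflexivity.
  - symmetry; auto.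
  - rewrite IHbs_eq1; auto.
Qed.

Lemma inj_iter {X} (g : X -> X) k : (forall x y, g x = g y -> x = y) ->
  forall x y, Nat.iter k g x = Nat.iter k g y -> x = y.
Proof. intros H. induction k; intros x y E; simpl in E; eauto. Qed.

Lemma torus_conj_iter (h hi g g' : T2 -> T2) :
  (forall p, hi (h p) = p) -> (forall p, h (hi p) = p) -> (forall p, h (g (hi p)) = g' p) ->
  forall k p, h (Nat.iter k g (hi p)) = Nat.iter k g' p.
Proof.
  intros Hinv Hinv' Hc k. induction k; intros p. simpl. auto.
  rewrite !Nat.iter_succ, <- IHk, <- Hc, Hinv. reflexivity.
Qed.

Open Scope R_scope.

Lemma linpart_mact M : linpart (mact M) M.
Proof. intros x m _. apply mact_add. Qed.

Lemma det_mul M N : det (mmul M N) = (det M * det N)%Z.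
Proof. destruct M, N; unfold det, mmul; simpl; ring. Qed.

Lemma mmul_id_r M : mmul M mid = M.
Proof. destruct M; unfold mmul, mid; cbn -[Z.mul Z.add]; f_equal; ring. Qed.

Theorem mainTheorem15 (n : nat) (a b c d : Z) (lam : R) :
  (2 <= n)%nat ->
  in_SL2Z a b c d ->
  hyperbolic a b c d ->
  is_eigenvalue a b c d lam ->
  lam > INR n ->
  ~ exists f finv : T2 -> T2,
      is_homeo f finv /\
      (forall p, toral_map a b c d (f (toral_map d (- b) (- c) a p))
                 = Nat.iter n f p) /\
      (forall w1 w2 : word,
          (forall p, eval_word (toral_map a b c d) (toral_map d (- b) (- c) a)
                               f finv w1 p
                   = eval_word (toral_map a b c d) (toral_map d (- b) (- c) a)
                               f finv w2 p) ->
          bs_eq n w1 w2).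
Proof.
  intros Hn Hdet Htr Heig Hlam [f [finv [[Hl [Hr [Hcf Hcfi]]] [Hrel Hfaith]]]].
  unfold in_SL2Z in Hdet. unfold hyperbolic in Htr.
  set (h := toral_map a b c d) in *. set (hi := toral_map d (- b) (- c) a) in *.
  set (A := mkM a b c d). set (Ai := mkM d (-b) (-c) a).
  assert (LA : lift h (mact A)) by exact (lift_toral a b c d).
  assert (LAi : lift hi (mact Ai)) by exact (lift_toral d (-b) (-c) a).
  assert (Hhih : forall p, hi (h p) = p).
  { intros p. rewrite <- (proj_rep p). rewrite <- (proj2 LA), <- (proj2 LAi).
    f_equal. apply inv_AiA; auto. }
  assert (Hhhi : forall p, h (hi p) = p).
  { intros p. rewrite <- (proj_rep p). rewrite <- (proj2 LAi), <- (proj2 LA).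
    f_equal. apply inv_AAi; auto. }
  destruct (lift_exists f Hcf) as [F [LF [dF [HdF HFloc]]]].
  destruct (lift_exists finv Hcfi) as [F' [LF' _]].
  destruct (lift_linpart f F LF) as [B HB].
  destruct (lift_linpart finv F' LF') as [B' HB'].
  assert (HdetB : (det B = 1 \/ det B = -1)%Z).
  { assert (L1 : lift (fun p => p) (fun x => F (F' x))).
    { replace (fun p : T2 => p) with (fun p => f (finv p)) by (apply functional_extensionality; auto).
      apply lift_comp; auto. }
    destruct (lift_unique _ _ _ L1 lift_id) as [v [Hv Ev]].
    assert (Efun : (fun x => F (F' x)) = (fun x => vadd x v)) by (apply functional_extensionality; auto).
    pose proof (linpart_comp _ _ _ _ HB HB') as LP1. rewrite Efun in LP1.
    assert (LP2 : linpart (fun x => vadd x v) mid) by (apply (linpart_transl (fun x => x)); intros x m _; rewrite mact_id; reflexivity).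
    pose proof (linpart_unique _ _ _ LP1 LP2) as EM.
    assert (Hd1 : (det B * det B' = 1)%Z) by (rewrite <- det_mul, EM; reflexivity).
    apply Z.mul_eq_1 in Hd1. lia. }
  assert (LHS : lift (fun p => h (f (hi p))) (fun x => mact A (F (mact Ai x)))).
  { apply (lift_comp h (fun p => f (hi p)) (mact A) (fun x => F (mact Ai x))); auto.
    apply lift_comp; auto. }
  replace (fun p => h (f (hi p))) with (Nat.iter n f) in LHS by (apply functional_extensionality; intros; rewrite Hrel; reflexivity).
  destruct (lift_unique _ _ _ LHS (lift_iter f F n LF)) as [v [Hv Ev]].
  assert (HAB : mmul A B = mmul (mpow B n) A).
  { assert (LP1 : linpart (fun x => mact A (F (mact Ai x))) (mmul A (mmul B Ai))).
    { apply linpart_comp. apply linpart_mact. apply linpart_comp; auto. apply linpart_mact. }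
    assert (Efun : (fun x => mact A (F (mact Ai x))) = (fun x => vadd (Nat.iter n F x) v))
      by (apply functional_extensionality; auto).
    rewrite Efun in LP1.
    pose proof (linpart_unique _ _ _ LP1 (linpart_transl _ _ v (linpart_iter F B n HB))) as EM.
    rewrite <- EM. rewrite <- !mmul_assoc.
    assert (EAi : mmul Ai A = mid) by (unfold Ai, A, mmul, mid; cbn -[Z.mul Z.add]; f_equal; lia).
    rewrite EAi, mmul_id_r. reflexivity. }
  destruct (finite_order a b c d B n Hdet ltac:(lia) Hn HdetB HAB) as [Q [HQ1 HQ]].
  set (F1 := Nat.iter Q F). set (f1 := Nat.iter Q f).
  assert (LF1 : lift f1 F1) by (apply lift_iter; auto).
  assert (HB1 : linpart F1 mid) by (rewrite <- HQ; apply linpart_iter; auto).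
  assert (T1 : tcomm F1) by (apply linpart_mid_tcomm; auto).
  assert (Hrel1 : forall p, h (f1 (hi p)) = Nat.iter n f1 p).
  { intros p. unfold f1. rewrite (torus_conj_iter h hi f (Nat.iter n f)); auto.
    apply iter_comm. }
  assert (LHS1 : lift (Nat.iter n f1) (fun x => mact A (F1 (mact Ai x)))).
  { replace (Nat.iter n f1) with (fun p => h (f1 (hi p))) by (apply functional_extensionality; auto).
    apply (lift_comp h (fun p => f1 (hi p)) (mact A) (fun x => F1 (mact Ai x))); auto.
    apply lift_comp; auto. }
  destruct (lift_unique _ _ _ LHS1 (lift_iter f1 F1 n LF1)) as [v1 [Hv1 Ev1]].
  destruct (rational_rot a b c d n F1 v1 Hdet Hn T1 Hv1 Ev1) as [q [w [Hq1 [Hw Hrelw]]]].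
  set (G := fun y => vadd (Nat.iter q F1 y) (vscale (-1) w)) in *.
  set (g := Nat.iter q f1).
  assert (Hmw : isZ2 (vscale (-1) w)) by (apply (isZ2_scale_Z (-1)); auto).
  assert (LG : lift g G) by (apply lift_transl; auto; apply lift_iter; auto).
  assert (TG : tcomm G).
  { intros x m Hm. unfold G. rewrite (tcomm_iter F1 q T1) by auto. apply vec_eq; simpl; ring. }
  assert (ginj : forall p1 p2, g p1 = g p2 -> p1 = p2).
  { unfold g, f1. apply inj_iter. apply inj_iter. intros x y E.
    rewrite <- (Hl x), <- (Hl y), E. reflexivity. }
  assert (Ginj : forall x y, G x = G y -> x = y).
  { intros x y E. assert (Ep : proj x = proj y).
    { apply ginj. rewrite <- !(proj2 LG). rewrite E. reflexivity. }
    apply proj_eq_inv in Ep.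
    assert (Hm : isZ2 (vsub y x)).
    { destruct Ep as [[z1 E1] [z2 E2]]. split; simpl in *;
      [exists (-z1)%Z | exists (-z2)%Z]; rewrite opp_IZR; lra. }
    pose proof (TG x _ Hm) as E2.
    replace (vadd x (vsub y x)) with y in E2 by (apply vec_eq; simpl; ring).
    rewrite E2 in E. destruct Hm as [[z1 E3] [z2 E4]].
    apply (f_equal fst) in E as E5; apply (f_equal snd) in E as E6. simpl in E5, E6.
    apply vec_eq; lra. }
  destruct (bound_local F dF B HdF HFloc HB) as [C0 HC0].
  destruct (bound_iter F B C0 HC0 Q) as [C1 HC1].
  rewrite HQ in HC1.
  assert (HC1' : forall x, nrm (vsub (F1 x) (mact mid x)) <= C1) by exact HC1.
  destruct (bound_iter F1 mid C1 HC1' q) as [C2 HC2].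
  assert (HbdG : forall x, nrm (vsub (G x) x) <= C2 + nrm (vscale (-1) w)).
  { intros x. pose proof (HC2 x) as H. rewrite mpow_mid, mact_id in H.
    unfold G. replace (vsub (vadd (Nat.iter q F1 x) (vscale (-1) w)) x) with
      (vadd (vsub (Nat.iter q F1 x) x) (vscale (-1) w)) by (apply vec_eq; simpl; ring).
    eapply Rle_trans. apply nrm_tri. lra. }
  pose proof (eig_char a b c d lam Hdet Heig) as Heig'.
  pose proof (dyn_core a b c d lam n G _ Hdet ltac:(lia) Hn Heig' Hlam (proj1 LG) Ginj HbdG Hrelw) as HGG.
  assert (Hgg : forall p, g (g p) = p).
  { intros p. rewrite <- (proj_rep p). rewrite <- !(proj2 LG). rewrite HGG. reflexivity. }
  set (N := (2 * (q * Q))%nat).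
  assert (HN : forall p, Nat.iter N f p = p).
  { intros p. assert (Eg : forall x, Nat.iter (q * Q) f x = g x) by (intros; unfold g, f1; apply iter_mul).
    unfold N. rewrite (iter_mul f 2 (q * Q)). simpl. rewrite !Eg. apply Hgg. }
  assert (Hbs := Hfaith (repeat Lb N) nil).
  assert (Hbs' : bs_eq n (repeat Lb N) nil).
  { apply Hbs. intros p. rewrite eval_repeat_Lb. simpl. apply HN. }
  pose proof (bs_inv n _ _ ltac:(lia) Hbs' 0) as E.
  unfold evR in E. rewrite eval_repeat_Lb, iter_plus1 in E. simpl in E.
  assert (0 < INR N) by (apply lt_0_INR; unfold N; lia). lra.
Qed.
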